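(* Let $a_1,a_2,b_1,b_2,\gamma>0$ and define $F_1(r)=\frac1{a_1}r^{a_1}$, $F_2(r)=\frac1{a_2}r^{a_2}$ for $r\ge0$, and $h(\mathbf r)=\dfrac{r_1^{b_1}r_2^{b_2}}{(1+r_1+r_2)^\gamma}$ for $\mathbf r\in[0,\infty)^2$. Then $F_1,F_2,h$ satisfy all the conditions (F), (h), ($\theta$) listed in the context if and only if, for $j=1,2$, \[a_j\ge2,\qquad b_j\ge2a_j-1,\qquad b_1+b_2\le\gamma+\min\{a_1,a_2\}.\]
   Context: Conditions. (F): for $j=1,2$, $F_j:[0,\infty)\to[0,\infty)$ is $C^2$ with $F_j''(r)>0$ for $r>0$, $F_j(0)=F_j'(0)=0$, $\liminf_{r\to\infty}F_j''(r)>0$, $\limsup_{r\to\infty}F_j'(r)/F_j(r)<\infty$; there are $m_j,M_j>0$, $\beta_j\ge0$, $r_0>0$ with $m_jr^{\beta_j}\le F_j''(r)\le M_jr^{\beta_j}$ for $0\le r\le r_0$; and $F_j(r)-rF_j'(r)+r^2F_j''(r)\ge0$ for all $r\ge0$. (h): $h:[0,\infty)^2\to\mathbb R$ is $C^2$ with $h(r_1,0)=h(0,r_2)=0$ and $\partial_{r_j}h(r_1,0)=\partial_{r_j}h(0,r_2)=0$ for $j=1,2$ and all $r_1,r_2\ge0$. ($\theta$): with $\theta_j(\mathbf u):=\partial_{r_j}h((F_1')^{-1}(u_1),(F_2')^{-1}(u_2))$ and $\theta_{j,i}:=\partial_{u_i}\theta_j$ (i.e. $\theta_{j,i}(\mathbf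 u)=\partial_{r_i}\partial_{r_j}h(\mathbf r)/F_i''(r_i)$, $r_k=(F_k')^{-1}(u_k)$), each $\theta_{j,i}$ is locally Lipschitz on $[0,\infty)^2$ and there are constants $\kappa_{j,i}>0$ with $|\partial_{r_i}\partial_{r_j}h(\mathbf r)|\le\kappa_{j,i}F_i''(r_i)\min\{1,F_1'(r_1),F_2'(r_2),\sqrt{r_i/r_j}\}$ for all $\mathbf r\in[0,\infty)^2$ and $i,j\in\{1,2\}$. *)

(* Defs.v *)
From Stdlib Require Import Reals Lra.
Open Scope R_scope.

(* Power r^a for r >= 0 with the conventions 0^a = 0 (a <> 0), 0^0 = 1. *)
Definition rpow (r a : R) : R :=
  if Rlt_dec 0 r then Rpower r a
  else if Req_EM_T a 0 then 1 else 0.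

Definition deriv_nn (f : R -> R) (x l : R) : Prop :=
  forall eps, 0 < eps -> exists d, 0 < d /\
    forall t, 0 <= t -> t <> x -> Rabs (t - x) < d ->
      Rabs ((f t - f x) / (t - x) - l) < eps.

Definition cont_nn (f : R -> R) (x : R) : Prop :=
  forall eps, 0 < eps -> exists d, 0 < d /\
    forall t, 0 <= t -> Rabs (t - x) < d -> Rabs (f t - f x) < eps.

Definition C2_nn (f f1 f2 : R -> R) : Prop :=
  forall x, 0 <= x -> deriv_nn f x (f1 x) /\ deriv_nn f1 x (f2 x) /\ cont_nn f2 x.

Definition condF_with (F F1 F2 : R -> R) : Prop :=
  (forall r, 0 <= r -> 0 <= F r) /\
  C2_nn F F1 F2 /\
  (forall r, 0 < r -> 0 < F2 r) /\
  F 0 = 0 /\ F1 0 = 0 /\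
  (* liminf_{r -> oo} F''(r) > 0 *)
  (exists c, 0 < c /\ exists R0, forall r, R0 <= r -> c <= F2 r) /\
  (* limsup_{r -> oo} F'(r)/F(r) < oo *)
  (exists C R0, forall r, R0 <= r -> F1 r / F r <= C) /\
  (exists m M beta r0, 0 < m /\ 0 < M /\ 0 <= beta /\ 0 < r0 /\
     forall r, 0 <= r <= r0 -> m * rpow r beta <= F2 r /\ F2 r <= M * rpow r beta) /\
  (forall r, 0 <= r -> F r - r * F1 r + r ^ 2 * F2 r >= 0).

Definition dist2 (x1 y1 x2 y2 : R) : R := sqrt ((x1 - x2) ^ 2 + (y1 - y2) ^ 2).

Definition partial1 (f : R -> R -> R) (x y l : R) : Prop := deriv_nn (fun t => f t y) x l.
Definition partial2 (f : R -> R -> R) (x y l : R) : Prop := deriv_nn (fun t => f x t) y l.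

Definition cont_Q (g : R -> R -> R) (x y : R) : Prop :=
  forall eps, 0 < eps -> exists d, 0 < d /\
    forall x' y', 0 <= x' -> 0 <= y' -> dist2 x' y' x y < d ->
      Rabs (g x' y' - g x y) < eps.

(* h is C^2 on [0,oo)^2; hj = d_{r_j} h, hji = d_{r_i} d_{r_j} h *)
Definition C2_Q (h h1 h2 h11 h12 h21 h22 : R -> R -> R) : Prop :=
  forall x y, 0 <= x -> 0 <= y ->
    partial1 h x y (h1 x y) /\ partial2 h x y (h2 x y) /\
    partial1 h1 x y (h11 x y) /\ partial2 h1 x y (h12 x y) /\
    partial1 h2 x y (h21 x y) /\ partial2 h2 x y (h22 x y) /\
    cont_Q h x y /\ cont_Q h1 x y /\ cont_Q h2 x y /\
    cont_Q h11 x y /\ cont_Q h12 x y /\ cont_Q h21 x y /\ cont_Q h22 x y.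

Definition loc_lip_Q (g : R -> R -> R) : Prop :=
  forall x y, 0 <= x -> 0 <= y -> exists d L, 0 < d /\
    forall x1 y1 x2 y2, 0 <= x1 -> 0 <= y1 -> 0 <= x2 -> 0 <= y2 ->
      dist2 x1 y1 x y < d -> dist2 x2 y2 x y < d ->
      Rabs (g x1 y1 - g x2 y2) <= L * dist2 x1 y1 x2 y2.

Definition inv_nn (G Fd : R -> R) : Prop :=
  forall u, 0 <= u -> 0 <= G u /\ Fd (G u) = u /\
  (forall r, 0 <= r -> Fd r = u -> r = G u).

Definition min4 (a b c d : R) : R := Rmin a (Rmin b (Rmin c d)).

(* All conditions (F), (h), (theta) for F1, F2, h.  The derivatives and the
   inverses (F_k')^{-1} are unique on the relevant domains, so quantifying
   them existentially is faithful. *)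
Definition all_conditions (F1 F2 : R -> R) (h : R -> R -> R) : Prop :=
  exists (F1d F1dd F2d F2dd : R -> R) (h1 h2 h11 h12 h21 h22 : R -> R -> R),
    condF_with F1 F1d F1dd /\ condF_with F2 F2d F2dd /\
    (* (h) *)
    C2_Q h h1 h2 h11 h12 h21 h22 /\
    (forall r1, 0 <= r1 -> h r1 0 = 0 /\ h1 r1 0 = 0 /\ h2 r1 0 = 0) /\
    (forall r2, 0 <= r2 -> h 0 r2 = 0 /\ h1 0 r2 = 0 /\ h2 0 r2 = 0) /\
    (* (theta) *)
    (exists G1 G2 : R -> R, inv_nn G1 F1d /\ inv_nn G2 F2d /\
      let th1 := fun u1 u2 => h1 (G1 u1) (G2 u2) in
      let th2 := fun u1 u2 => h2 (G1 u1) (G2 u2) in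
      exists th11 th12 th21 th22 : R -> R -> R,
        (forall u1 u2, 0 <= u1 -> 0 <= u2 ->
           partial1 th1 u1 u2 (th11 u1 u2) /\ partial2 th1 u1 u2 (th12 u1 u2) /\
           partial1 th2 u1 u2 (th21 u1 u2) /\ partial2 th2 u1 u2 (th22 u1 u2)) /\
        loc_lip_Q th11 /\ loc_lip_Q th12 /\ loc_lip_Q th21 /\ loc_lip_Q th22) /\
    (exists k11 k12 k21 k22 : R, 0 < k11 /\ 0 < k12 /\ 0 < k21 /\ 0 < k22 /\
      forall x y, 0 <= x -> 0 <= y ->
        Rabs (h11 x y) <= k11 * F1dd x * min4 1 (F1d x) (F2d y) (sqrt (x / x)) /\
        Rabs (h12 x y) <= k12 * F2dd y * min4 1 (F1d x) (F2d y) (sqrt (y / x)) /\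
        Rabs (h21 x y) <= k21 * F1dd x * min4 1 (F1d x) (F2d y) (sqrt (x / y)) /\
        Rabs (h22 x y) <= k22 * F2dd y * min4 1 (F1d x) (F2d y) (sqrt (y / y))).

Definition Fpow (a : R) (r : R) : R := rpow r a / a.

Definition hmodel (b1 b2 gamma : R) (x y : R) : R :=
  rpow x b1 * rpow y b2 / Rpower (1 + x + y) gamma.

(* Main.v *)
Require Import Defs.
From Stdlib Require Import Reals.
From Stdlib Require Import Lra List.
From Coquelicot Require Derive.
Import ListNotations.
Open Scope R_scope.

Lemma Rpower_pos' x y : 0 < Rpower x y.
Proof. unfold Rpower; apply exp_pos. Qed.

Lemma rpow_pos r a : 0 < r -> rpow r a = Rpower r a.
Proof. intro H; unfold rpow; destruct (Rlt_dec 0 r); [reflexivity|lra]. Qed.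

Lemma rpow_0 a : a <> 0 -> rpow 0 a = 0.
Proof. intro H; unfold rpow; destruct (Rlt_dec 0 0); [lra|]. destruct (Req_EM_T a 0); [contradiction|reflexivity]. Qed.

Lemma rpow_ge0 r a : 0 <= rpow r a.
Proof. unfold rpow; destruct (Rlt_dec 0 r); [left; apply Rpower_pos'|]. destruct (Req_EM_T a 0); lra. Qed.

Lemma rpow_e0 r : 0 <= r -> rpow r 0 = 1.
Proof. intro H; unfold rpow; destruct (Rlt_dec 0 r). apply Rpower_O; auto.
destruct (Req_EM_T 0 0); [reflexivity|lra]. Qed.

Lemma rpow_e1 r : 0 <= r -> rpow r 1 = r.
Proof. intro H; destruct (Req_dec r 0). subst; apply rpow_0; lra.
rewrite rpow_pos by lra; apply Rpower_1; lra. Qed.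

Lemma rpow_pos_pos r a : 0 < r -> 0 < rpow r a.
Proof. intro; rewrite rpow_pos; auto; apply Rpower_pos'. Qed.

Lemma rpow_plus r a b : 0 <= r -> a <> 0 -> b <> 0 -> a + b <> 0 -> rpow r (a + b) = rpow r a * rpow r b.
Proof. intros H Ha Hb Hab. destruct (Req_dec r 0). subst; rewrite !rpow_0; auto; ring.
rewrite !rpow_pos by lra. apply Rpower_plus. Qed.

Lemma rpow_plus_pos r a b : 0 < r -> rpow r (a + b) = rpow r a * rpow r b.
Proof. intros; rewrite !rpow_pos by lra. apply Rpower_plus. Qed.

Lemma rpow_rpow r a b : 0 <= r -> a <> 0 -> a * b <> 0 -> rpow (rpow r a) b = rpow r (a * b).
Proof. intros H Ha Hab. destruct (Req_dec r 0). subst. rewrite (rpow_0 a) by auto.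
 assert (b <> 0) by (intro; subst; apply Hab; ring). rewrite !rpow_0; auto.
rewrite (rpow_pos r) by lra. rewrite rpow_pos by apply Rpower_pos'. rewrite rpow_pos by lra. apply Rpower_mult. Qed.

Lemma Rabs_lt_iff x e : Rabs x < e <-> -e < x < e.
Proof. split. intro H; split; [apply Rabs_def2 in H; lra| apply Rabs_def2 in H; lra].
intros [H1 H2]; apply Rabs_def1; lra. Qed.

Lemma deriv_nn_unique f x l1 l2 : 0 <= x -> deriv_nn f x l1 -> deriv_nn f x l2 -> l1 = l2.
Proof.
intros Hx H1 H2. destruct (Req_dec l1 l2) as [|Hne]; auto. exfalso.
set (e := Rabs (l1 - l2) / 2).
assert (He : 0 < e) by (unfold e; assert (l1 - l2 <> 0) by (intro; apply Hne; lra); pose proof (Rabs_pos_lt _ H); lra).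
destruct (H1 e He) as [d1 [Hd1 K1]]. destruct (H2 e He) as [d2 [Hd2 K2]].
set (t := x + Rmin d1 d2 / 2).
assert (Hm: 0 < Rmin d1 d2) by (apply Rmin_pos; auto).
assert (Ht1 : Rabs (t - x) < d1). { unfold t. rewrite Rabs_right by lra. pose proof (Rmin_l d1 d2); lra. }
assert (Ht2 : Rabs (t - x) < d2). { unfold t. rewrite Rabs_right by lra. pose proof (Rmin_r d1 d2); lra. }
specialize (K1 t ltac:(unfold t; lra) ltac:(unfold t; lra) Ht1).
specialize (K2 t ltac:(unfold t; lra) ltac:(unfold t; lra) Ht2).
set (s := (f t - f x) / (t - x)) in *.
assert (Rabs (l1 - l2) <= Rabs (s - l2) + Rabs (s - l1)).
{ replace (l1 - l2) with ((s - l2) - (s - l1)) by ring. eapply Rle_trans; [apply Rabs_triang|]. rewrite Rabs_Ropp; lra. }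
unfold e in *; lra.
Qed.

Lemma deriv_nn_ext f g x l : 0 <= x -> (forall t, 0 <= t -> f t = g t) -> deriv_nn f x l -> deriv_nn g x l.
Proof. intros Hx E H eps He. destruct (H eps He) as [d [Hd K]]. exists d; split; auto.
intros t Ht Htx Hd'. rewrite <- !E by auto. apply K; auto. Qed.

Lemma cont_nn_ext f g x : 0 <= x -> (forall t, 0 <= t -> f t = g t) -> cont_nn f x -> cont_nn g x.
Proof. intros Hx E H eps He. destruct (H eps He) as [d [Hd K]]. exists d; split; auto.
intros t Ht Hd'. rewrite <- !E by auto. apply K; auto. Qed.

Lemma deriv_nn_cont f x l : deriv_nn f x l -> cont_nn f x.
Proof.
intros H eps He. destruct (H 1 Rlt_0_1) as [d [Hd K]].
set (c := Rabs l + 1).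
assert (Hc : 0 < c) by (unfold c; pose proof (Rabs_pos l); lra).
exists (Rmin d (eps / c)). split. apply Rmin_pos; auto. apply Rdiv_lt_0_compat; auto.
intros t Ht Htd. destruct (Req_dec t x). subst; rewrite Rminus_diag, Rabs_R0; auto.
assert (Htd1 : Rabs (t - x) < d) by (pose proof (Rmin_l d (eps/c)); lra).
assert (Htd2 : Rabs (t - x) < eps / c) by (pose proof (Rmin_r d (eps/c)); lra).
specialize (K t Ht H0 Htd1).
assert (Hne : t - x <> 0) by lra.
replace (f t - f x) with (((f t - f x) / (t - x)) * (t - x)) by (field; auto).
rewrite Rabs_mult.
assert (Rabs ((f t - f x) / (t - x)) <= c).
{ unfold c. replace ((f t - f x) / (t - x)) with (((f t - f x) / (t - x) - l) + l) by ring.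
  eapply Rle_trans; [apply Rabs_triang|]. lra. }
apply Rle_lt_trans with (c * Rabs (t - x)). apply Rmult_le_compat_r; auto; apply Rabs_pos.
apply Rmult_lt_reg_r with (/ c). apply Rinv_0_lt_compat; auto.
replace (c * Rabs (t - x) * / c) with (Rabs (t - x)) by (field; lra). exact Htd2.
Qed.

Lemma deriv_nn_plus f g x lf lg : deriv_nn f x lf -> deriv_nn g x lg ->
  deriv_nn (fun t => f t + g t) x (lf + lg).
Proof.
intros Hf Hg eps He. destruct (Hf (eps/2) ltac:(lra)) as [d1 [Hd1 K1]].
destruct (Hg (eps/2) ltac:(lra)) as [d2 [Hd2 K2]].
exists (Rmin d1 d2); split. apply Rmin_pos; auto.
intros t Ht Htx Hd. specialize (K1 t Ht Htx ltac:(pose proof (Rmin_l d1 d2); lra)).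
specialize (K2 t Ht Htx ltac:(pose proof (Rmin_r d1 d2); lra)).
assert (Hne : t - x <> 0) by lra.
replace ((f t + g t - (f x + g x)) / (t - x) - (lf + lg)) with
  (((f t - f x) / (t - x) - lf) + ((g t - g x) / (t - x) - lg)) by (field; auto).
eapply Rle_lt_trans; [apply Rabs_triang|]. lra.
Qed.

Lemma deriv_nn_scal c f x l : deriv_nn f x l -> deriv_nn (fun t => c * f t) x (c * l).
Proof.
intros Hf eps He.
destruct (Hf (eps / (Rabs c + 1))) as [d [Hd K]].
{ apply Rdiv_lt_0_compat; auto. pose proof (Rabs_pos c); lra. }
exists d; split; auto. intros t Ht Htx Hdt. specialize (K t Ht Htx Hdt).
assert (Hne : t - x <> 0) by lra.
replace ((c * f t - c * f x) / (t - x) - c * l) with (c * ((f t - f x) / (t - x) - l)) by (field; auto).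
rewrite Rabs_mult.
pose proof (Rabs_pos c). pose proof (Rabs_pos ((f t - f x) / (t - x) - l)).
apply Rle_lt_trans with ((Rabs c + 1) * Rabs ((f t - f x) / (t - x) - l)). nra.
apply Rmult_lt_reg_r with (/ (Rabs c + 1)). apply Rinv_0_lt_compat; lra.
replace ((Rabs c + 1) * Rabs ((f t - f x) / (t - x) - l) * / (Rabs c + 1)) with (Rabs ((f t - f x) / (t - x) - l)) by (field; lra).
exact K.
Qed.

Lemma deriv_nn_zero x : deriv_nn (fun _ => 0) x 0.
Proof. intros eps He; exists 1; split; [lra|]. intros. replace ((0 - 0) / (t - x) - 0) with 0 by (field; lra). rewrite Rabs_R0; auto. Qed.

Lemma deriv_nn_of_lim f g x l : 0 < x -> derivable_pt_lim g x l ->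
  (forall t, 0 < t -> f t = g t) -> deriv_nn f x l.
Proof.
intros Hx Hg E eps He. destruct (Hg eps He) as [d Hd].
exists (Rmin d x). split. apply Rmin_pos; auto. apply cond_pos.
intros t Ht Htx Hdt.
assert (Ht0 : 0 < t). { pose proof (Rmin_r d x). apply Rabs_lt_iff in Hdt. lra. }
rewrite !E by auto.
specialize (Hd (t - x) ltac:(lra) ltac:(pose proof (Rmin_l d x); lra)).
replace (x + (t - x)) with t in Hd by ring. exact Hd.
Qed.

Lemma deriv_nn_at0 f q : f 0 = 0 -> (forall t, 0 < t -> f t = t * q t) -> cont_nn q 0 ->
  deriv_nn f 0 (q 0).
Proof.
intros H0 Hq Hc eps He. destruct (Hc eps He) as [d [Hd K]]. exists d; split; auto.
intros t Ht Htx Hdt. assert (0 < t) by lra.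
rewrite H0, Hq by auto. replace ((t * q t - 0) / (t - 0)) with (q t) by (field; lra).
apply K; auto.
Qed.

Lemma cont_nn_of_pt f x : continuity_pt f x -> cont_nn f x.
Proof.
intros H eps He. destruct (H eps He) as [d [Hd K]]. exists d; split; auto.
intros t Ht Hdt. destruct (Req_dec t x). subst; rewrite Rminus_diag, Rabs_R0; auto.
apply (K t). split. split; [exact I| auto]. simpl; unfold R_dist; auto.
Qed.

Lemma cont_nn_mult f g x : cont_nn f x -> cont_nn g x -> cont_nn (fun t => f t * g t) x.
Proof.
intros Hf Hg eps He.
set (A := Rabs (f x) + 1). set (B := Rabs (g x) + 1).
assert (HA : 0 < A) by (unfold A; pose proof (Rabs_pos (f x)); lra).
assert (HB : 0 < B) by (unfold B; pose proof (Rabs_pos (g x)); lra).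
set (e1 := Rmin 1 (eps / (2 * B))). set (e2 := eps / (2 * (A + 1))).
assert (He1 : 0 < e1) by (unfold e1; apply Rmin_pos; [lra| apply Rdiv_lt_0_compat; lra]).
assert (He2 : 0 < e2) by (unfold e2; apply Rdiv_lt_0_compat; lra).
destruct (Hf e1 He1) as [d1 [Hd1 K1]]. destruct (Hg e2 He2) as [d2 [Hd2 K2]].
exists (Rmin d1 d2); split. apply Rmin_pos; auto.
intros t Ht Hdt. specialize (K1 t Ht ltac:(pose proof (Rmin_l d1 d2); lra)).
specialize (K2 t Ht ltac:(pose proof (Rmin_r d1 d2); lra)).
replace (f t * g t - f x * g x) with ((f t - f x) * g x + f t * (g t - g x)) by ring.
eapply Rle_lt_trans; [apply Rabs_triang|]. rewrite !Rabs_mult.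
assert (Hft : Rabs (f t) <= A + 1).
{ unfold A. replace (f t) with ((f t - f x) + f x) by ring. eapply Rle_trans; [apply Rabs_triang|].
  pose proof (Rmin_l 1 (eps / (2 * B))). fold e1 in H. lra. }
assert (E1 : Rabs (f t - f x) * Rabs (g x) <= e1 * B).
{ unfold B. apply Rmult_le_compat; try apply Rabs_pos; lra. }
assert (E1' : e1 * B <= eps / 2).
{ pose proof (Rmin_r 1 (eps / (2 * B))). fold e1 in H.
  apply Rle_trans with (eps / (2 * B) * B). apply Rmult_le_compat_r; lra.
  right; field; lra. }
assert (E2 : Rabs (f t) * Rabs (g t - g x) < (A + 1) * e2).
{ apply Rle_lt_trans with ((A+1) * Rabs (g t - g x)). apply Rmult_le_compat_r; auto; apply Rabs_pos.
  apply Rmult_lt_compat_l; lra. }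
assert (E2' : (A + 1) * e2 = eps / 2) by (unfold e2; field; lra).
lra.
Qed.

Lemma cont_nn_plus f g x : cont_nn f x -> cont_nn g x -> cont_nn (fun t => f t + g t) x.
Proof.
intros Hf Hg eps He. destruct (Hf (eps/2) ltac:(lra)) as [d1 [Hd1 K1]].
destruct (Hg (eps/2) ltac:(lra)) as [d2 [Hd2 K2]].
exists (Rmin d1 d2); split. apply Rmin_pos; auto.
intros t Ht Hd. specialize (K1 t Ht ltac:(pose proof (Rmin_l d1 d2); lra)).
specialize (K2 t Ht ltac:(pose proof (Rmin_r d1 d2); lra)).
replace (f t + g t - (f x + g x)) with ((f t - f x) + (g t - g x)) by ring.
eapply Rle_lt_trans; [apply Rabs_triang|]. lra.
Qed.

Lemma cont_nn_const c x : cont_nn (fun _ => c) x.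
Proof. intros eps He; exists 1; split; [lra|]; intros; rewrite Rminus_diag, Rabs_R0; auto. Qed.

Lemma cont_nn_comp g f x : cont_nn f x -> continuity_pt g (f x) -> cont_nn (fun t => g (f t)) x.
Proof.
intros Hf Hg eps He. destruct (Hg eps He) as [d [Hd K]].
destruct (Hf d Hd) as [d' [Hd' K']]. exists d'; split; auto.
intros t Ht Hdt. destruct (Req_dec (f t) (f x)) as [E|E]. rewrite E, Rminus_diag, Rabs_R0; auto.
apply (K (f t)). split. split; [exact I| auto]. simpl; unfold R_dist; auto.
Qed.

Lemma Rpower_small p eps : 0 < p -> 0 < eps -> exists d, 0 < d /\ forall t, 0 < t < d -> Rpower t p < eps.
Proof.
intros Hp He. exists (Rpower eps (/ p)). split. apply Rpower_pos'.
intros t [Ht1 Ht2]. replace eps with (Rpower (Rpower eps (/p)) p).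
apply Rlt_Rpower_l; auto. rewrite Rpower_mult. replace (/ p * p) with 1 by (field; lra). apply Rpower_1; auto.
Qed.

Lemma cont_rpow p x : 0 <= p -> 0 <= x -> cont_nn (fun t => rpow t p) x.
Proof.
intros Hp Hx. destruct Hx as [Hx|Hx].
- apply cont_nn_ext with (fun t => if Rlt_dec 0 t then Rpower t p else rpow t p); [lra| |].
  { intros t Ht. destruct (Rlt_dec 0 t); auto. rewrite rpow_pos; auto. }
  intros eps He.
  assert (Hc : continuity_pt (fun t => Rpower t p) x).
  { apply derivable_continuous_pt. exists (p * Rpower x (p - 1)). apply derivable_pt_lim_power; auto. }
  destruct (Hc eps He) as [d [Hd K]]. exists (Rmin d x). split. apply Rmin_pos; auto.
  intros t Ht Hdt. assert (0 < t) by (pose proof (Rmin_r d x); apply Rabs_lt_iff in Hdt; lra).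
  destruct (Rlt_dec 0 t); [|lra]. destruct (Rlt_dec 0 x); [|lra].
  destruct (Req_dec t x). subst; rewrite Rminus_diag, Rabs_R0; auto.
  apply (K t). split. split; [exact I| auto]. simpl; unfold R_dist; pose proof (Rmin_l d x); lra.
- subst x. destruct Hp as [Hp|Hp].
  + intros eps He. destruct (Rpower_small p eps Hp He) as [d [Hd K]]. exists d; split; auto.
    intros t Ht Hdt. rewrite (rpow_0 p) by lra. rewrite Rminus_0_r.
    destruct Ht as [Ht|Ht]. rewrite rpow_pos by auto. rewrite Rabs_right by (left; apply Rpower_pos').
    apply K. split; auto. rewrite Rminus_0_r, Rabs_right in Hdt; lra.
    subst; rewrite rpow_0, Rabs_R0 by lra; lra.
  + subst p. apply cont_nn_ext with (fun _ => 1). lra. intros; rewrite rpow_e0; auto. apply cont_nn_const.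
Qed.

Lemma deriv_nn_eq f x l l' : deriv_nn f x l -> l = l' -> deriv_nn f x l'.
Proof. intros H E; subst; auto. Qed.

Lemma Rpower_cont s p : 0 < s -> continuity_pt (fun t => Rpower t p) s.
Proof. intro H. apply derivable_continuous_pt. exists (p * Rpower s (p - 1)). apply derivable_pt_lim_power; auto. Qed.

Lemma rpow_split1 t a : 0 < t -> rpow t a = t * rpow t (a - 1).
Proof. intro H. rewrite !rpow_pos by auto. replace a with (1 + (a - 1)) at 1 by ring.
rewrite Rpower_plus, Rpower_1; auto. Qed.

Lemma mono1_deriv A a e r x : 0 < A -> 1 <= a -> 0 < e -> 0 <= x ->
  deriv_nn (fun t => rpow t a * Rpower (A + rpow t e) (-r)) x
   (a * rpow x (a-1) * Rpower (A + rpow x e) (-r) - r * e * rpow x (a+e-1) * Rpower (A + rpow x e) (-r-1)).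
Proof.
intros HA Ha He Hx. destruct Hx as [Hx|Hx].
- set (f1 := fun t => Rpower t a).
  set (f2 := fun t => A + Rpower t e).
  set (f3 := fun s => Rpower s (-r)).
  assert (D1 : derivable_pt_lim f1 x (a * Rpower x (a - 1))) by (apply derivable_pt_lim_power; auto).
  assert (D2 : derivable_pt_lim f2 x (0 + e * Rpower x (e - 1))).
  { apply derivable_pt_lim_plus. apply derivable_pt_lim_const. apply derivable_pt_lim_power; auto. }
  assert (Hpos : 0 < f2 x) by (unfold f2; pose proof (Rpower_pos' x e); lra).
  assert (D3 : derivable_pt_lim f3 (f2 x) (-r * Rpower (f2 x) (-r - 1))) by (apply derivable_pt_lim_power; auto).
  assert (D4 := derivable_pt_lim_comp f2 f3 x _ _ D2 D3).
  assert (D5 := derivable_pt_lim_mult f1 (comp f3 f2) x _ _ D1 D4).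
  eapply deriv_nn_eq. eapply deriv_nn_of_lim; [exact Hx| exact D5|].
  { intros t Ht. unfold mult_fct, comp, f1, f2, f3. rewrite !rpow_pos; auto. }
  unfold comp, f1, f2, f3. rewrite !rpow_pos by auto.
  replace (a + e - 1) with (a + (e - 1)) by ring. rewrite Rpower_plus. ring.
- subst x. eapply deriv_nn_eq. apply deriv_nn_at0 with (q := fun t => rpow t (a - 1) * Rpower (A + rpow t e) (-r)).
  + rewrite rpow_0 by lra. ring.
  + intros t Ht. rewrite (rpow_split1 t a) by auto. ring.
  + apply cont_nn_mult. apply cont_rpow; lra.
    apply cont_nn_comp with (g := fun s => Rpower s (-r)).
    apply cont_nn_plus. apply cont_nn_const. apply cont_rpow; lra.
    apply Rpower_cont. rewrite rpow_0 by lra. lra.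
  + rewrite (rpow_0 (a + e - 1)) by lra. destruct Ha as [Ha|Ha].
    rewrite rpow_0 by lra. ring. subst a. replace (1 - 1) with 0 by ring. ring.
Qed.

Inductive mon := Mo (c a b r : R).

Definition mono (e1 e2 : R) (m : mon) (u1 u2 : R) : R :=
  match m with Mo c a b r => c * (rpow u1 a * rpow u2 b * Rpower (1 + rpow u1 e1 + rpow u2 e2) (-r)) end.

Fixpoint ev (e1 e2 : R) (P : list mon) (u1 u2 : R) : R :=
  match P with nil => 0 | m :: Q => mono e1 e2 m u1 u2 + ev e1 e2 Q u1 u2 end.

Fixpoint d1 (e1 : R) (P : list mon) : list mon :=
  match P with nil => nil
  | Mo c a b r :: Q => Mo (c * a) (a - 1) b r :: Mo (-(c * r * e1)) (a + e1 - 1) b (r + 1) :: d1 e1 Q end.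

Fixpoint d2 (e2 : R) (P : list mon) : list mon :=
  match P with nil => nil
  | Mo c a b r :: Q => Mo (c * b) a (b - 1) r :: Mo (-(c * r * e2)) a (b + e2 - 1) (r + 1) :: d2 e2 Q end.

Definition ma (m : mon) := match m with Mo _ a _ _ => a end.
Definition mb (m : mon) := match m with Mo _ _ b _ => b end.
Definition mr (m : mon) := match m with Mo _ _ _ r => r end.
Definition mc (m : mon) := match m with Mo c _ _ _ => c end.

Lemma ev_partial1 e1 e2 P u1 u2 : Forall (fun m => 1 <= ma m) P -> 0 < e1 -> 0 <= u1 -> 0 <= u2 ->
  partial1 (ev e1 e2 P) u1 u2 (ev e1 e2 (d1 e1 P) u1 u2).
Proof.
intros HP He Hu1 Hu2. unfold partial1. induction HP as [|m Q Hm HQ IH].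
- simpl. apply deriv_nn_zero.
- destruct m as [c a b r]. simpl in Hm |- *.
  replace (c * a * (rpow u1 (a - 1) * rpow u2 b * Rpower (1 + rpow u1 e1 + rpow u2 e2) (- r)) +
   (- (c * r * e1) * (rpow u1 (a + e1 - 1) * rpow u2 b * Rpower (1 + rpow u1 e1 + rpow u2 e2) (- (r + 1))) +
    ev e1 e2 (d1 e1 Q) u1 u2))
   with ((c * rpow u2 b) * (a * rpow u1 (a-1) * Rpower ((1 + rpow u2 e2) + rpow u1 e1) (-r) - r * e1 * rpow u1 (a+e1-1) * Rpower ((1 + rpow u2 e2) + rpow u1 e1) (-r-1)) + ev e1 e2 (d1 e1 Q) u1 u2).
  2:{ replace (1 + rpow u2 e2 + rpow u1 e1) with (1 + rpow u1 e1 + rpow u2 e2) by ring.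
      replace (-(r+1)) with (-r-1) by ring. ring. }
  apply deriv_nn_plus; auto.
  eapply deriv_nn_ext; [exact Hu1| |].
  2:{ apply deriv_nn_scal. apply mono1_deriv; auto. pose proof (rpow_ge0 u2 e2); lra. }
  intros t Ht. simpl. replace (1 + rpow u2 e2 + rpow t e1) with (1 + rpow t e1 + rpow u2 e2) by ring. ring.
Qed.

Lemma ev_partial2 e1 e2 P u1 u2 : Forall (fun m => 1 <= mb m) P -> 0 < e2 -> 0 <= u1 -> 0 <= u2 ->
  partial2 (ev e1 e2 P) u1 u2 (ev e1 e2 (d2 e2 P) u1 u2).
Proof.
intros HP He Hu1 Hu2. unfold partial2. induction HP as [|m Q Hm HQ IH].
- simpl. apply deriv_nn_zero.
- destruct m as [c a b r]. simpl in Hm |- *.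
  replace (c * b * (rpow u1 a * rpow u2 (b - 1) * Rpower (1 + rpow u1 e1 + rpow u2 e2) (- r)) +
   (- (c * r * e2) * (rpow u1 a * rpow u2 (b + e2 - 1) * Rpower (1 + rpow u1 e1 + rpow u2 e2) (- (r + 1))) +
    ev e1 e2 (d2 e2 Q) u1 u2))
   with ((c * rpow u1 a) * (b * rpow u2 (b-1) * Rpower ((1 + rpow u1 e1) + rpow u2 e2) (-r) - r * e2 * rpow u2 (b+e2-1) * Rpower ((1 + rpow u1 e1) + rpow u2 e2) (-r-1)) + ev e1 e2 (d2 e2 Q) u1 u2).
  2:{ replace (-(r+1)) with (-r-1) by ring. ring. }
  apply deriv_nn_plus; auto.
  eapply deriv_nn_ext; [exact Hu2| |].
  2:{ apply deriv_nn_scal. apply mono1_deriv; auto. pose proof (rpow_ge0 u1 e1); lra. }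
  intros t Ht. simpl. ring.
Qed.

Lemma dist2_ge1 x1 y1 x2 y2 : Rabs (x1 - x2) <= dist2 x1 y1 x2 y2.
Proof. unfold dist2. rewrite <- sqrt_Rsqr_abs. apply sqrt_le_1_alt. unfold Rsqr. pose proof (pow2_ge_0 (y1 - y2)); pose proof (pow2_ge_0 (x1-x2)); simpl in *; nra. Qed.
Lemma dist2_ge2 x1 y1 x2 y2 : Rabs (y1 - y2) <= dist2 x1 y1 x2 y2.
Proof. unfold dist2. rewrite <- sqrt_Rsqr_abs. apply sqrt_le_1_alt. unfold Rsqr. pose proof (pow2_ge_0 (y1 - y2)); pose proof (pow2_ge_0 (x1-x2)); simpl in *; nra. Qed.
Lemma dist2_le x1 y1 x2 y2 : dist2 x1 y1 x2 y2 <= Rabs (x1 - x2) + Rabs (y1 - y2).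
Proof. unfold dist2. rewrite <- (sqrt_Rsqr (Rabs (x1 - x2) + Rabs (y1 - y2))).
 apply sqrt_le_1_alt. unfold Rsqr. pose proof (Rabs_pos (x1-x2)). pose proof (Rabs_pos (y1-y2)).
 assert (E1 : (x1-x2)^2 = Rabs (x1-x2) * Rabs (x1-x2)) by (rewrite <- Rabs_mult, Rabs_right; [ring| pose proof (Rle_0_sqr (x1-x2)); unfold Rsqr in *; lra]).
 assert (E2 : (y1-y2)^2 = Rabs (y1-y2) * Rabs (y1-y2)) by (rewrite <- Rabs_mult, Rabs_right; [ring| pose proof (Rle_0_sqr (y1-y2)); unfold Rsqr in *; lra]).
 rewrite E1, E2. nra.
 pose proof (Rabs_pos (x1-x2)). pose proof (Rabs_pos (y1-y2)). lra. Qed.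

Lemma cont_Q_plus f g x y : cont_Q f x y -> cont_Q g x y -> cont_Q (fun a b => f a b + g a b) x y.
Proof.
intros Hf Hg eps He. destruct (Hf (eps/2) ltac:(lra)) as [d1 [Hd1 K1]].
destruct (Hg (eps/2) ltac:(lra)) as [d2 [Hd2 K2]].
exists (Rmin d1 d2); split. apply Rmin_pos; auto.
intros a b Ha Hb Hd. specialize (K1 a b Ha Hb ltac:(pose proof (Rmin_l d1 d2); lra)).
specialize (K2 a b Ha Hb ltac:(pose proof (Rmin_r d1 d2); lra)).
replace (f a b + g a b - (f x y + g x y)) with ((f a b - f x y) + (g a b - g x y)) by ring.
eapply Rle_lt_trans; [apply Rabs_triang|]. lra.
Qed.

Lemma cont_Q_mult f g x y : cont_Q f x y -> cont_Q g x y -> cont_Q (fun a b => f a b * g a b) x y.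
Proof.
intros Hf Hg eps He.
set (A := Rabs (f x y) + 1). set (B := Rabs (g x y) + 1).
assert (HA : 0 < A) by (unfold A; pose proof (Rabs_pos (f x y)); lra).
assert (HB : 0 < B) by (unfold B; pose proof (Rabs_pos (g x y)); lra).
set (e1 := Rmin 1 (eps / (2 * B))). set (e2 := eps / (2 * (A + 1))).
assert (He1 : 0 < e1) by (unfold e1; apply Rmin_pos; [lra| apply Rdiv_lt_0_compat; lra]).
assert (He2 : 0 < e2) by (unfold e2; apply Rdiv_lt_0_compat; lra).
destruct (Hf e1 He1) as [d1 [Hd1 K1]]. destruct (Hg e2 He2) as [d2 [Hd2 K2]].
exists (Rmin d1 d2); split. apply Rmin_pos; auto.
intros a b Ha Hb Hdt. specialize (K1 a b Ha Hb ltac:(pose proof (Rmin_l d1 d2); lra)).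
specialize (K2 a b Ha Hb ltac:(pose proof (Rmin_r d1 d2); lra)).
replace (f a b * g a b - f x y * g x y) with ((f a b - f x y) * g x y + f a b * (g a b - g x y)) by ring.
eapply Rle_lt_trans; [apply Rabs_triang|]. rewrite !Rabs_mult.
assert (Hft : Rabs (f a b) <= A + 1).
{ unfold A. replace (f a b) with ((f a b - f x y) + f x y) by ring. eapply Rle_trans; [apply Rabs_triang|].
  pose proof (Rmin_l 1 (eps / (2 * B))). fold e1 in H. lra. }
assert (E1 : Rabs (f a b - f x y) * Rabs (g x y) <= e1 * B).
{ unfold B. apply Rmult_le_compat; try apply Rabs_pos; lra. }
assert (E1' : e1 * B <= eps / 2).
{ pose proof (Rmin_r 1 (eps / (2 * B))). fold e1 in H.
  apply Rle_trans with (eps / (2 * B) * B). apply Rmult_le_compat_r; lra.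
  right; field; lra. }
assert (E2 : Rabs (f a b) * Rabs (g a b - g x y) < (A + 1) * e2).
{ apply Rle_lt_trans with ((A+1) * Rabs (g a b - g x y)). apply Rmult_le_compat_r; auto; apply Rabs_pos.
  apply Rmult_lt_compat_l; lra. }
assert (E2' : (A + 1) * e2 = eps / 2) by (unfold e2; field; lra).
lra.
Qed.

Lemma cont_Q_const c x y : cont_Q (fun _ _ => c) x y.
Proof. intros eps He; exists 1; split; [lra|]; intros; rewrite Rminus_diag, Rabs_R0; auto. Qed.

Lemma cont_Q_fst f x y : cont_nn f x -> cont_Q (fun a _ => f a) x y.
Proof. intros H eps He. destruct (H eps He) as [d [Hd K]]. exists d; split; auto.
intros a b Ha Hb Hd'. apply K; auto. pose proof (dist2_ge1 a b x y); lra. Qed.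

Lemma cont_Q_snd f x y : cont_nn f y -> cont_Q (fun _ b => f b) x y.
Proof. intros H eps He. destruct (H eps He) as [d [Hd K]]. exists d; split; auto.
intros a b Ha Hb Hd'. apply K; auto. pose proof (dist2_ge2 a b x y); lra. Qed.

Lemma cont_Q_comp g f x y : cont_Q f x y -> continuity_pt g (f x y) -> cont_Q (fun a b => g (f a b)) x y.
Proof.
intros Hf Hg eps He. destruct (Hg eps He) as [d [Hd K]].
destruct (Hf d Hd) as [d' [Hd' K']]. exists d'; split; auto.
intros a b Ha Hb Hdt. destruct (Req_dec (f a b) (f x y)) as [E|E]. rewrite E, Rminus_diag, Rabs_R0; auto.
apply (K (f a b)). split. split; [exact I| auto]. simpl; unfold R_dist; auto.
Qed.

Lemma cont_Q_ext f g x y : (forall a b, 0 <= a -> 0 <= b -> f a b = g a b) -> 0 <= x -> 0 <= y ->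
  cont_Q f x y -> cont_Q g x y.
Proof. intros E Hx Hy H eps He. destruct (H eps He) as [d [Hd K]]. exists d; split; auto.
intros a b Ha Hb Hd'. rewrite <- !E by auto. apply K; auto. Qed.

Lemma ev_cont e1 e2 P x y : Forall (fun m => 0 <= ma m /\ 0 <= mb m) P -> 0 <= e1 -> 0 <= e2 ->
  0 <= x -> 0 <= y -> cont_Q (ev e1 e2 P) x y.
Proof.
intros HP He1 He2 Hx Hy. induction HP as [|m Q Hm HQ IH].
- simpl. apply cont_Q_const.
- destruct m as [c a b r]. simpl in Hm. simpl. apply cont_Q_plus; auto.
  apply cont_Q_mult. apply cont_Q_const.
  apply cont_Q_mult. apply cont_Q_mult.
  apply cont_Q_fst. apply cont_rpow; tauto.
  apply cont_Q_snd. apply cont_rpow; tauto.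
  apply cont_Q_comp with (g := fun s => Rpower s (-r)).
  apply cont_Q_plus. apply cont_Q_plus. apply cont_Q_const.
  apply cont_Q_fst. apply cont_rpow; tauto. apply cont_Q_snd. apply cont_rpow; tauto.
  apply Rpower_cont. pose proof (rpow_ge0 x e1). pose proof (rpow_ge0 y e2). lra.
Qed.

Lemma mvt_nn f f' a b B : 0 <= a <= b -> (forall t, a <= t <= b -> deriv_nn f t (f' t)) ->
  (forall t, a <= t <= b -> Rabs (f' t) <= B) -> Rabs (f b - f a) <= B * (b - a).
Proof.
intros Hab Hd HB. destruct (Req_dec a b) as [E|E].
{ subst. rewrite Rminus_diag, Rabs_R0. ring_simplify. lra. }
set (g := fun t => f (Rmin b (Rmax a t))).
assert (Ga : g a = f a). { unfold g. rewrite Rmax_left by lra. rewrite Rmin_right by lra. auto. }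
assert (Gb : g b = f b). { unfold g. rewrite Rmax_right by lra. rewrite Rmin_left by lra. auto. }
assert (Gin : forall t, a <= t <= b -> g t = f t).
{ intros t Ht. unfold g. rewrite Rmax_right by lra. rewrite Rmin_right by lra. auto. }
destruct (Derive.MVT_gen g a b f') as [c [Hc Eq]].
- rewrite Rmin_left, Rmax_right by lra. intros x Hx. apply Derive.is_derive_Reals.
  intros eps He. destruct (Hd x ltac:(lra) eps He) as [d [Hd0 K]].
  assert (Hpos : 0 < Rmin d (Rmin (x - a) (b - x))) by (repeat apply Rmin_pos; lra).
  exists (mkposreal _ Hpos). intros h Hh Hhd. simpl in Hhd.
  pose proof (Rmin_l d (Rmin (x - a) (b - x))). pose proof (Rmin_r d (Rmin (x - a) (b - x))).
  pose proof (Rmin_l (x - a) (b - x)). pose proof (Rmin_r (x - a) (b - x)).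
  apply Rabs_lt_iff in Hhd as Hh2.
  rewrite !Gin by lra.
  specialize (K (x + h) ltac:(lra) ltac:(lra)).
  replace (x + h - x) with h in K by ring. apply K. lra.
- rewrite Rmin_left, Rmax_right by lra. intros x Hx.
  assert (Cx := deriv_nn_cont _ _ _ (Hd x Hx)).
  intros eps He. destruct (Cx eps He) as [d [Hd0 K]]. exists d. split; auto.
  intros t [_ Ht]. simpl in Ht. unfold R_dist in Ht |- *. unfold g.
  rewrite (Rmax_right a x) by lra. rewrite (Rmin_right b x) by lra.
  apply K. unfold Rmin, Rmax; repeat destruct Rle_dec; lra.
  unfold Rmin, Rmax; repeat destruct Rle_dec; apply Rabs_lt_iff in Ht; apply Rabs_lt_iff; lra.
- rewrite Rmin_left, Rmax_right in Hc by lra. rewrite <- Ga, <- Gb, Eq. rewrite Rabs_mult.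
  rewrite (Rabs_right (b - a)) by lra. apply Rmult_le_compat_r; [lra|]. apply HB; auto.
Qed.

Lemma mvt_box f f' M B a b : 0 <= a <= M -> 0 <= b <= M ->
  (forall t, 0 <= t <= M -> deriv_nn f t (f' t) /\ Rabs (f' t) <= B) -> Rabs (f b - f a) <= B * Rabs (b - a).
Proof.
intros Ha Hb H. destruct (Rle_dec a b).
- rewrite (Rabs_right (b - a)) by lra. apply (mvt_nn f f'); [lra| |]; intros t Ht; apply H; lra.
- rewrite Rabs_minus_sym, (Rabs_minus_sym b a). rewrite (Rabs_right (a - b)) by lra.
  apply (mvt_nn f f'); [lra| |]; intros t Ht; apply H; lra.
Qed.

Lemma rpow_le_M u a M : 0 <= u <= M -> 1 <= M -> 0 <= a -> rpow u a <= Rpower M a.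
Proof.
intros Hu HM Ha. assert (H1 : 1 <= Rpower M a).
{ rewrite <- (Rpower_O M) by lra. apply Rle_Rpower; lra. }
destruct (Req_dec u 0). subst. unfold rpow. destruct Rlt_dec; [lra|]. destruct Req_EM_T; lra.
rewrite rpow_pos by lra. apply Rle_Rpower_l; lra.
Qed.

Lemma Rpower_neg_le1 S r : 1 <= S -> 0 <= r -> Rpower S (-r) <= 1.
Proof. intros. rewrite <- (Rpower_O S) by lra. apply Rle_Rpower; lra. Qed.

Fixpoint bnd (M : R) (P : list mon) : R :=
  match P with nil => 0 | Mo c a b r :: Q => Rabs c * Rpower M a * Rpower M b + bnd M Q end.

Lemma ev_box e1 e2 P M u1 u2 : Forall (fun m => 0 <= ma m /\ 0 <= mb m /\ 0 <= mr m) P ->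
  0 <= u1 <= M -> 0 <= u2 <= M -> 1 <= M -> Rabs (ev e1 e2 P u1 u2) <= bnd M P.
Proof.
intros HP Hu1 Hu2 HM. induction HP as [|m Q Hm HQ IH].
- simpl. rewrite Rabs_R0; lra.
- destruct m as [c a b r]. simpl in Hm |- *.
  eapply Rle_trans; [apply Rabs_triang|]. apply Rplus_le_compat; auto.
  rewrite !Rabs_mult. rewrite (Rabs_right (rpow u1 a)) by (apply Rle_ge; apply rpow_ge0).
  rewrite (Rabs_right (rpow u2 b)) by (apply Rle_ge; apply rpow_ge0).
  rewrite (Rabs_right (Rpower _ _)) by (apply Rle_ge; left; apply Rpower_pos').
  pose proof (rpow_le_M u1 a M Hu1 HM ltac:(tauto)).
  pose proof (rpow_le_M u2 b M Hu2 HM ltac:(tauto)).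
  pose proof (rpow_ge0 u1 a). pose proof (rpow_ge0 u2 b).
  pose proof (rpow_ge0 u1 e1). pose proof (rpow_ge0 u2 e2).
  assert (Hp := Rpower_neg_le1 (1 + rpow u1 e1 + rpow u2 e2) r ltac:(lra) ltac:(tauto)).
  pose proof (Rpower_pos' (1 + rpow u1 e1 + rpow u2 e2) (-r)).
  pose proof (Rabs_pos c).
  rewrite !Rmult_assoc. apply Rmult_le_compat_l; auto.
  apply Rle_trans with (rpow u1 a * rpow u2 b). 
  { rewrite <- Rmult_assoc. rewrite <- (Rmult_1_r (rpow u1 a * rpow u2 b)) at 2. apply Rmult_le_compat_l; nra. }
  apply Rmult_le_compat; auto.
Qed.

Lemma Forall_d1 e1 P : 0 < e1 -> Forall (fun m => 1 <= ma m /\ 1 <= mb m /\ 0 <= mr m) P ->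
  Forall (fun m => 0 <= ma m /\ 0 <= mb m /\ 0 <= mr m) (d1 e1 P).
Proof. intros He HP. induction HP as [|m Q Hm HQ IH]; simpl; auto.
destruct m as [c a b r]; simpl in *. constructor; [simpl; lra|]. constructor; [simpl; lra| auto]. Qed.

Lemma Forall_d2 e2 P : 0 < e2 -> Forall (fun m => 1 <= ma m /\ 1 <= mb m /\ 0 <= mr m) P ->
  Forall (fun m => 0 <= ma m /\ 0 <= mb m /\ 0 <= mr m) (d2 e2 P).
Proof. intros He HP. induction HP as [|m Q Hm HQ IH]; simpl; auto.
destruct m as [c a b r]; simpl in *. constructor; [simpl; lra|]. constructor; [simpl; lra| auto]. Qed.

Lemma ev_lip e1 e2 P : 0 < e1 -> 0 < e2 -> Forall (fun m => 1 <= ma m /\ 1 <= mb m /\ 0 <= mr m) P ->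
  loc_lip_Q (ev e1 e2 P).
Proof.
intros He1 He2 HP x y Hx Hy.
set (M := x + y + 2).
set (L1 := bnd M (d1 e1 P)). set (L2 := bnd M (d2 e2 P)).
assert (HP1 : Forall (fun m => 1 <= ma m) P) by exact (Forall_impl _ (fun m (Hm : 1 <= ma m /\ 1 <= mb m /\ 0 <= mr m) => proj1 Hm) HP).
assert (HP2 : Forall (fun m => 1 <= mb m) P) by exact (Forall_impl _ (fun m (Hm : 1 <= ma m /\ 1 <= mb m /\ 0 <= mr m) => proj1 (proj2 Hm)) HP).
pose proof (Forall_d1 e1 P He1 HP) as HD1. pose proof (Forall_d2 e2 P He2 HP) as HD2.
exists 1, (L1 + L2). split; [lra|].
intros x1 y1 x2 y2 Hx1 Hy1 Hx2 Hy2 D1 D2.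
pose proof (dist2_ge1 x1 y1 x y). pose proof (dist2_ge2 x1 y1 x y).
pose proof (dist2_ge1 x2 y2 x y). pose proof (dist2_ge2 x2 y2 x y).
assert (B1 : x1 <= M) by (unfold M; assert (Q : Rabs (x1 - x) < 1) by lra; apply Rabs_lt_iff in Q; lra).
assert (B2 : y1 <= M) by (unfold M; assert (Q : Rabs (y1 - y) < 1) by lra; apply Rabs_lt_iff in Q; lra).
assert (B3 : x2 <= M) by (unfold M; assert (Q : Rabs (x2 - x) < 1) by lra; apply Rabs_lt_iff in Q; lra).
assert (B4 : y2 <= M) by (unfold M; assert (Q : Rabs (y2 - y) < 1) by lra; apply Rabs_lt_iff in Q; lra).
assert (HM : 1 <= M) by (unfold M; lra).
assert (E1 : Rabs (ev e1 e2 P x1 y1 - ev e1 e2 P x2 y1) <= L1 * Rabs (x1 - x2)).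
{ apply (mvt_box (fun t => ev e1 e2 P t y1) (fun t => ev e1 e2 (d1 e1 P) t y1) M); try lra.
  intros t Ht. split. apply ev_partial1; auto; lra. apply ev_box; auto; lra. }
assert (E2 : Rabs (ev e1 e2 P x2 y1 - ev e1 e2 P x2 y2) <= L2 * Rabs (y1 - y2)).
{ apply (mvt_box (fun t => ev e1 e2 P x2 t) (fun t => ev e1 e2 (d2 e2 P) x2 t) M); try lra.
  intros t Ht. split. apply ev_partial2; auto; lra. apply ev_box; auto; lra. }
assert (HL1 : 0 <= L1) by (eapply Rle_trans; [apply Rabs_pos| apply (ev_box e1 e2 (d1 e1 P) M 0 0); auto; lra]).
assert (HL2 : 0 <= L2) by (eapply Rle_trans; [apply Rabs_pos| apply (ev_box e1 e2 (d2 e2 P) M 0 0); auto; lra]).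
pose proof (dist2_ge1 x1 y1 x2 y2). pose proof (dist2_ge2 x1 y1 x2 y2).
replace (ev e1 e2 P x1 y1 - ev e1 e2 P x2 y2) with ((ev e1 e2 P x1 y1 - ev e1 e2 P x2 y1) + (ev e1 e2 P x2 y1 - ev e1 e2 P x2 y2)) by ring.
eapply Rle_trans; [apply Rabs_triang|].
apply Rle_trans with (L1 * Rabs (x1 - x2) + L2 * Rabs (y1 - y2)). lra.
assert (L1 * Rabs (x1 - x2) <= L1 * dist2 x1 y1 x2 y2) by (apply Rmult_le_compat_l; auto).
assert (L2 * Rabs (y1 - y2) <= L2 * dist2 x1 y1 x2 y2) by (apply Rmult_le_compat_l; auto).
lra.
Qed.

Lemma rpow_deriv p x : 1 <= p -> 0 <= x -> deriv_nn (fun t => rpow t p) x (p * rpow x (p - 1)).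
Proof.
intros Hp Hx. eapply deriv_nn_eq. eapply deriv_nn_ext; [exact Hx| |].
2:{ apply (mono1_deriv 1 p 1 0 x); lra. }
{ intros t Ht. simpl. rewrite Ropp_0, Rpower_O by (pose proof (rpow_ge0 t 1); lra). ring. }
rewrite Ropp_0, Rpower_O by (pose proof (rpow_ge0 x 1); lra). ring.
Qed.

Definition Fd (a : R) := fun r => rpow r (a - 1).
Definition Fdd (a : R) := fun r => (a - 1) * rpow r (a - 2).

Lemma rpow_ge1 r a : 1 <= r -> 0 <= a -> 1 <= rpow r a.
Proof. intros. rewrite rpow_pos by lra. rewrite <- (Rpower_O r) by lra. apply Rle_Rpower; lra. Qed.

Lemma condF_Fpow a : 2 <= a -> condF_with (Fpow a) (Fd a) (Fdd a).
Proof.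
intro Ha. unfold condF_with, Fpow, Fd, Fdd. split; [|split; [|split; [|split; [|split; [|split; [|split; [|split]]]]]]].
- intros r Hr. pose proof (rpow_ge0 r a). apply Rle_mult_inv_pos; lra.
- intros x Hx. split; [|split].
  + eapply deriv_nn_eq. eapply deriv_nn_ext; [exact Hx| |]. 2:{ apply (deriv_nn_scal (/a)). apply (rpow_deriv a x); [lra|exact Hx]. }
    intros; simpl; unfold Rdiv; ring. field; lra.
  + eapply deriv_nn_eq. apply (rpow_deriv (a-1) x); [lra|exact Hx]. replace (a - 1 - 1) with (a - 2) by ring; ring.
  + apply cont_nn_mult. apply cont_nn_const. apply cont_rpow; lra.
- intros r Hr. pose proof (rpow_pos_pos r (a-2) Hr). nra.
- rewrite rpow_0 by lra. unfold Rdiv; ring.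
- apply rpow_0; lra.
- exists (a - 1). split; [lra|]. exists 1. intros r Hr. pose proof (rpow_ge1 r (a-2) Hr ltac:(lra)). nra.
- exists a, 1. intros r Hr. rewrite (rpow_split1 r a) by lra.
  pose proof (rpow_pos_pos r (a - 1) ltac:(lra)).
  replace (rpow r (a - 1) / (r * rpow r (a - 1) / a)) with (a / r) by (field; repeat split; lra).
  unfold Rdiv. apply Rle_trans with (a * 1). apply Rmult_le_compat_l; [lra|].
  rewrite <- Rinv_1. apply Rinv_le_contravar; lra. lra.
- exists (a-1), (a-1), (a-2), 1. repeat split; try lra.
- intros r Hr. destruct Hr as [Hr|Hr].
  + rewrite (rpow_split1 r a) by lra. rewrite (rpow_split1 r (a-1)) by lra.
    replace (a - 1 - 1) with (a - 2) by ring.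
    pose proof (rpow_pos_pos r (a - 2) Hr). set (z := rpow r (a - 2)) in *.
    replace (r * (r * z) / a - r * (r * z) + r ^ 2 * ((a - 1) * z)) with (r^2 * z * ((a-1)^2 / a)) by (field; lra).
    apply Rle_ge. apply Rmult_le_pos. apply Rmult_le_pos. nra. lra. apply Rle_mult_inv_pos; nra.
  + subst r. rewrite !rpow_0 by lra. unfold Rdiv. ring_simplify. lra.
Qed.

Lemma inv_Fd a : 2 <= a -> inv_nn (fun u => rpow u (/ (a - 1))) (Fd a).
Proof.
intros Ha u Hu. unfold Fd. assert (He : / (a - 1) <> 0) by (apply Rinv_neq_0_compat; lra).
split; [apply rpow_ge0|split].
- rewrite rpow_rpow; auto. replace (/ (a - 1) * (a - 1)) with 1 by (field; lra). apply rpow_e1; auto.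
  replace (/ (a - 1) * (a - 1)) with 1 by (field; lra). lra.
- intros r Hr E. subst u. rewrite rpow_rpow; auto; try lra.
  replace ((a - 1) * / (a - 1)) with 1 by (field; lra). rewrite rpow_e1; auto.
  replace ((a - 1) * / (a - 1)) with 1 by (field; lra). lra.
Qed.

Definition subm (e1 e2 : R) (m : mon) : mon := match m with Mo c a b r => Mo c (e1 * a) (e2 * b) r end.

Lemma ev_sub e1 e2 P u1 u2 : 0 < e1 -> 0 < e2 -> 0 <= u1 -> 0 <= u2 ->
  Forall (fun m => 0 < ma m /\ 0 < mb m) P ->
  ev 1 1 P (rpow u1 e1) (rpow u2 e2) = ev e1 e2 (map (subm e1 e2) P) u1 u2.
Proof.
intros He1 He2 Hu1 Hu2 HP. induction HP as [|m Q Hm HQ IH]; simpl; auto.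
destruct m as [c a b r]; simpl in *. rewrite IH. f_equal.
rewrite !rpow_rpow; try lra; try nra. rewrite !Rmult_1_r. reflexivity.
Qed.

Lemma ev_zero1 e1 e2 P y : 0 < e1 -> Forall (fun m => 0 < ma m) P -> ev e1 e2 P 0 y = 0.
Proof. intros He HP. induction HP as [|m Q Hm HQ IH]; simpl; auto.
destruct m as [c a b r]; simpl in *. rewrite IH, rpow_0 by lra. ring. Qed.

Lemma ev_zero2 e1 e2 P x : 0 < e2 -> Forall (fun m => 0 < mb m) P -> ev e1 e2 P x 0 = 0.
Proof. intros He HP. induction HP as [|m Q Hm HQ IH]; simpl; auto.
destruct m as [c a b r]; simpl in *. rewrite IH, (rpow_0 b) by lra. ring. Qed.

Fixpoint sabs (P : list mon) : R := match P with nil => 0 | m :: Q => Rabs (mc m) + sabs Q end.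

Lemma sabs_ge0 P : 0 <= sabs P.
Proof. induction P; simpl. lra. pose proof (Rabs_pos (mc a)); lra. Qed.

Lemma mono_le x y a b r p q : 0 < x -> 0 < y -> 0 <= a - p -> 0 <= b - q -> (a - p) + (b - q) <= r ->
  Rpower x a * Rpower y b * Rpower (1 + x + y) (- r) <= Rpower x p * Rpower y q.
Proof.
intros Hx Hy H1 H2 H3. set (S := 1 + x + y).
replace a with (p + (a - p)) at 1 by ring. replace b with (q + (b - q)) at 1 by ring.
rewrite !Rpower_plus.
assert (E1 : Rpower x (a - p) <= Rpower S (a - p)) by (apply Rle_Rpower_l; unfold S; lra).
assert (E2 : Rpower y (b - q) <= Rpower S (b - q)) by (apply Rle_Rpower_l; unfold S; lra).
assert (E3 : Rpower S (a - p) * Rpower S (b - q) * Rpower S (-r) <= 1).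
{ rewrite <- !Rpower_plus. rewrite <- (Rpower_O S) by (unfold S; lra). apply Rle_Rpower; unfold S; lra. }
pose proof (Rpower_pos' x p). pose proof (Rpower_pos' y q). pose proof (Rpower_pos' x (a-p)).
pose proof (Rpower_pos' y (b-q)). pose proof (Rpower_pos' S (-r)). pose proof (Rpower_pos' S (a-p)). pose proof (Rpower_pos' S (b-q)).
set (X := Rpower x p * Rpower y q).
assert (0 < X) by (unfold X; nra).
replace (Rpower x p * Rpower x (a - p) * (Rpower y q * Rpower y (b - q)) * Rpower S (- r)) with
  (X * (Rpower x (a - p) * Rpower y (b - q) * Rpower S (- r))) by (unfold X; ring).
rewrite <- (Rmult_1_r X) at 2. apply Rmult_le_compat_l; [lra|].
apply Rle_trans with (Rpower S (a - p) * Rpower S (b - q) * Rpower S (- r)); auto.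
apply Rmult_le_compat_r; [lra|]. apply Rmult_le_compat; lra.
Qed.

Definition bcond (p q : R) (m : mon) : Prop := p <= ma m /\ q <= mb m /\ (ma m - p) + (mb m - q) <= mr m.

Lemma ev_bound_pos P x y p q : 0 < x -> 0 < y -> Forall (bcond p q) P ->
  Rabs (ev 1 1 P x y) <= sabs P * (Rpower x p * Rpower y q).
Proof.
intros Hx Hy HP. induction HP as [|m Q Hm HQ IH]; simpl.
- rewrite Rabs_R0. lra.
- destruct m as [c a b r]; unfold bcond in Hm; simpl in *.
  eapply Rle_trans; [apply Rabs_triang|]. rewrite Rmult_plus_distr_r. apply Rplus_le_compat; auto.
  rewrite Rabs_mult. apply Rmult_le_compat_l; [apply Rabs_pos|].
  rewrite !rpow_pos by lra. rewrite !Rpower_1 by lra.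
  rewrite Rabs_right. apply mono_le; auto; lra.
  pose proof (Rpower_pos' x a). pose proof (Rpower_pos' y b). pose proof (Rpower_pos' (1 + x + y) (-r)).
  apply Rle_ge. left. apply Rmult_lt_0_compat; [apply Rmult_lt_0_compat|]; auto.
Qed.

Lemma min4_le z c A B C D : 0 <= c -> z <= c * A -> z <= c * B -> z <= c * C -> z <= c * D ->
  z <= c * min4 A B C D.
Proof. intros. unfold min4, Rmin. repeat destruct Rle_dec; auto. Qed.

Lemma min4_ge0 A B C D : 0 <= A -> 0 <= B -> 0 <= C -> 0 <= D -> 0 <= min4 A B C D.
Proof. intros. unfold min4, Rmin. repeat destruct Rle_dec; auto. Qed.

Lemma sqrt_div_pos x y : 0 < x -> 0 < y -> sqrt (y / x) = Rpower x (- / 2) * Rpower y (/ 2).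
Proof.
intros Hx Hy. rewrite <- Rpower_sqrt by (apply Rdiv_lt_0_compat; auto).
unfold Rpower. rewrite <- exp_plus. f_equal. unfold Rdiv. rewrite ln_mult; auto. rewrite ln_Rinv; auto. ring.
apply Rinv_0_lt_compat; auto.
Qed.

Ltac fa := repeat (apply Forall_cons; [simpl; unfold bcond; simpl; repeat split; nra|]); apply Forall_nil.

Lemma bterm L x y p q c T : 0 < x -> 0 < y -> Forall (bcond p q) L ->
  Rpower x p * Rpower y q = c * T -> Rabs (ev 1 1 L x y) <= sabs L * c * T.
Proof. intros Hx Hy HL E. rewrite Rmult_assoc, <- E. apply ev_bound_pos; auto. Qed.

Lemma fin_le z s K F m k a : 0 <= s -> 0 <= K -> 0 <= m -> 1 < a -> k = (s + 1) / (a - 1) -> F = (a - 1) * K ->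
  z <= s * K * m -> z <= k * F * m.
Proof. intros Hs HK Hm Ha Hk HF Hz. subst k F. eapply Rle_trans; [exact Hz|].
replace ((s + 1) / (a - 1) * ((a - 1) * K) * m) with ((s + 1) * K * m) by (field; lra).
apply Rmult_le_compat_r; auto. apply Rmult_le_compat_r; auto. lra. Qed.

Lemma einv_facts a : 2 <= a -> 0 < / (a - 1) /\ / (a - 1) * (a - 1) = 1.
Proof. intro. split. apply Rinv_0_lt_compat; lra. field; lra. Qed.

Lemma suff a1 a2 b1 b2 g : 0 < g -> 2 <= a1 -> 2 <= a2 -> 2 * a1 - 1 <= b1 -> 2 * a2 - 1 <= b2 ->
  b1 + b2 <= g + a1 -> b1 + b2 <= g + a2 -> all_conditions (Fpow a1) (Fpow a2) (hmodel b1 b2 g).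
Proof.
intros Hg Ha1 Ha2 Hb1 Hb2 Hc1 Hc2.
set (Ph := [Mo 1 b1 b2 g]).
assert (Hev : forall x y, 0 <= x -> 0 <= y -> ev 1 1 Ph x y = hmodel b1 b2 g x y).
{ intros x y Hx Hy. unfold hmodel, Ph. simpl. rewrite !rpow_e1 by auto. rewrite Rpower_Ropp. unfold Rdiv. ring. }
set (L11 := d1 1 (d1 1 Ph)). set (L12 := d2 1 (d1 1 Ph)). set (L21 := d1 1 (d2 1 Ph)). set (L22 := d2 1 (d2 1 Ph)).
exists (Fd a1), (Fdd a1), (Fd a2), (Fdd a2), (ev 1 1 (d1 1 Ph)), (ev 1 1 (d2 1 Ph)),
  (ev 1 1 L11), (ev 1 1 L12), (ev 1 1 L21), (ev 1 1 L22).
split; [apply condF_Fpow; auto|]. split; [apply condF_Fpow; auto|].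
split; [|split; [|split; [|split]]].
-
  intros x y Hx Hy.
  split. { unfold partial1. eapply deriv_nn_ext; [exact Hx| |]. 2:{ apply ev_partial1; auto; [fa|lra]. } intros; apply Hev; auto. }
  split. { unfold partial2. eapply deriv_nn_ext; [exact Hy| |]. 2:{ apply ev_partial2; auto; [fa|lra]. } intros; apply Hev; auto. }
  split. { apply ev_partial1; auto; [fa|lra]. }
  split. { apply ev_partial2; auto; [fa|lra]. }
  split. { apply ev_partial1; auto; [fa|lra]. }
  split. { apply ev_partial2; auto; [fa|lra]. }
  split. { eapply cont_Q_ext; [exact Hev| auto| auto|]. apply ev_cont; auto; [fa|lra|lra]. }
  split. { apply ev_cont; auto; [fa|lra|lra]. }
  split. { apply ev_cont; auto; [fa|lra|lra]. }
  split. { apply ev_cont; auto; [fa|lra|lra]. }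
  split. { apply ev_cont; auto; [fa|lra|lra]. }
  split. { apply ev_cont; auto; [fa|lra|lra]. }
  { apply ev_cont; auto; [fa|lra|lra]. }
- intros r1 Hr1. split; [|split].
  + unfold hmodel. rewrite (rpow_0 b2) by lra. unfold Rdiv; ring.
  + apply ev_zero2; [lra|fa].
  + apply ev_zero2; [lra|fa].
- intros r2 Hr2. split; [|split].
  + unfold hmodel. rewrite (rpow_0 b1) by lra. unfold Rdiv; ring.
  + apply ev_zero1; [lra|fa].
  + apply ev_zero1; [lra|fa].
-
  set (e1 := / (a1 - 1)). set (e2 := / (a2 - 1)).
  destruct (einv_facts a1 Ha1) as [He1 E1]. destruct (einv_facts a2 Ha2) as [He2 E2]. fold e1 in He1, E1. fold e2 in He2, E2.
  exists (fun u => rpow u e1), (fun u => rpow u e2).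
  split; [apply inv_Fd; auto|]. split; [apply inv_Fd; auto|]. cbv zeta.
  set (S1 := map (subm e1 e2) (d1 1 Ph)). set (S2 := map (subm e1 e2) (d2 1 Ph)).
  exists (ev e1 e2 (d1 e1 S1)), (ev e1 e2 (d2 e2 S1)), (ev e1 e2 (d1 e1 S2)), (ev e1 e2 (d2 e2 S2)).
  assert (T1 : forall u1 u2, 0 <= u1 -> 0 <= u2 -> ev 1 1 (d1 1 Ph) (rpow u1 e1) (rpow u2 e2) = ev e1 e2 S1 u1 u2).
  { intros; apply ev_sub; auto. fa. }
  assert (T2 : forall u1 u2, 0 <= u1 -> 0 <= u2 -> ev 1 1 (d2 1 Ph) (rpow u1 e1) (rpow u2 e2) = ev e1 e2 S2 u1 u2).
  { intros; apply ev_sub; auto. fa. }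
  split; [|split; [|split; [|split]]].
  + intros u1 u2 Hu1 Hu2. unfold partial1, partial2.
    split. { eapply deriv_nn_ext; [exact Hu1| |]. 2:{ apply ev_partial1; auto. unfold S1; fa. } intros; symmetry; apply T1; auto. }
    split. { eapply deriv_nn_ext; [exact Hu2| |]. 2:{ apply ev_partial2; auto. unfold S1; fa. } intros; symmetry; apply T1; auto. }
    split. { eapply deriv_nn_ext; [exact Hu1| |]. 2:{ apply ev_partial1; auto. unfold S2; fa. } intros; symmetry; apply T2; auto. }
    { eapply deriv_nn_ext; [exact Hu2| |]. 2:{ apply ev_partial2; auto. unfold S2; fa. } intros; symmetry; apply T2; auto. }
  + apply ev_lip; auto. unfold S1; fa.
  + apply ev_lip; auto. unfold S1; fa.
  + apply ev_lip; auto. unfold S2; fa.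
  + apply ev_lip; auto. unfold S2; fa.
-
  exists ((sabs L11 + 1) / (a1 - 1)), ((sabs L12 + 1) / (a2 - 1)), ((sabs L21 + 1) / (a1 - 1)), ((sabs L22 + 1) / (a2 - 1)).
  assert (Hk : forall s a, 2 <= a -> 0 <= s -> 0 < (s + 1) / (a - 1)) by (intros; apply Rdiv_lt_0_compat; lra).
  pose proof (sabs_ge0 L11) as S11. pose proof (sabs_ge0 L12) as S12. pose proof (sabs_ge0 L21) as S21. pose proof (sabs_ge0 L22) as S22.
  split; [apply Hk; auto|]. split; [apply Hk; auto|]. split; [apply Hk; auto|]. split; [apply Hk; auto|].
  intros x y Hx Hy. unfold Fd, Fdd.
  assert (Hm : forall s, 0 <= s -> 0 <= min4 1 (rpow x (a1 - 1)) (rpow y (a2 - 1)) (sqrt s)).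
  { intros. apply min4_ge0; try lra; try apply rpow_ge0; apply sqrt_pos. }
  assert (Hz : forall L k a z s, 2 <= a -> 0 <= k -> 0 <= z -> ev 1 1 L x y = 0 ->
     Rabs (ev 1 1 L x y) <= k * ((a - 1) * z) * min4 1 (rpow x (a1 - 1)) (rpow y (a2 - 1)) (sqrt s)).
  { intros L k a z s Ha Hk0 Hz0 E0. rewrite E0, Rabs_R0. apply Rmult_le_pos; [apply Rmult_le_pos|]; auto.
    apply Rmult_le_pos; lra. apply min4_ge0; try lra; try apply rpow_ge0; apply sqrt_pos. }
  destruct (Req_dec x 0) as [Ex|Ex].
  { subst x. repeat split; (apply Hz; [lra| left; apply Hk; [lra| apply sabs_ge0]| apply rpow_ge0|]);
    (rewrite ev_zero1; [reflexivity|lra| unfold L11, L12, L21, L22; fa]). }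
  destruct (Req_dec y 0) as [Ey|Ey].
  { subst y. repeat split; (apply Hz; [lra| left; apply Hk; [lra| apply sabs_ge0]| apply rpow_ge0|]);
    (rewrite ev_zero2; [reflexivity|lra| unfold L11, L12, L21, L22; fa]). }
  assert (Px : 0 < x) by lra. assert (Py : 0 < y) by lra. clear Ex Ey.
  rewrite !(rpow_pos x) by auto. rewrite !(rpow_pos y) by auto.
  assert (Q1 : x / x = 1) by (field; lra). assert (Q2 : y / y = 1) by (field; lra).
  rewrite Q1, Q2, sqrt_1. rewrite (sqrt_div_pos x y), (sqrt_div_pos y x) by auto.
  pose proof (Rpower_pos' x (a1 - 2)) as PX. pose proof (Rpower_pos' y (a2 - 2)) as PY.
  pose proof (Rpower_pos' x (a1 - 1)). pose proof (Rpower_pos' y (a2 - 1)).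
  pose proof (Rpower_pos' x (-/2)). pose proof (Rpower_pos' y (/2)).
  pose proof (Rpower_pos' y (-/2)). pose proof (Rpower_pos' x (/2)).
  assert (M4 : forall A B C D, 0 <= A -> 0 <= B -> 0 <= C -> 0 <= D -> 0 <= min4 A B C D) by (intros; apply min4_ge0; auto).
  split; [|split; [|split]].
  + eapply (fin_le _ _ _ _ _ _ a1); [exact S11| left; exact PX| apply M4; try lra; apply Rmult_le_pos; lra| lra| reflexivity| reflexivity|].
    apply min4_le; [apply Rmult_le_pos; lra| | | |].
    * apply bterm with (a1 - 2) 0; auto. unfold L11; fa. rewrite Rpower_O by lra. ring.
    * apply bterm with (2 * a1 - 3) 0; auto. unfold L11; fa. rewrite Rpower_O by lra. rewrite Rmult_1_r, <- Rpower_plus. f_equal; ring.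
    * apply bterm with (a1 - 2) (a2 - 1); auto. unfold L11; fa.
    * apply bterm with (a1 - 2) 0; auto. unfold L11; fa. rewrite Rpower_O by lra. ring.
  + eapply (fin_le _ _ _ _ _ _ a2); [exact S12| left; exact PY| apply M4; try lra; apply Rmult_le_pos; lra| lra| reflexivity| reflexivity|].
    apply min4_le; [apply Rmult_le_pos; lra| | | |].
    * apply bterm with 0 (a2 - 2); auto. unfold L12; fa. rewrite Rpower_O by lra. ring.
    * apply bterm with (a1 - 1) (a2 - 2); auto. unfold L12; fa. ring.
    * apply bterm with 0 (2 * a2 - 3); auto. unfold L12; fa. rewrite Rpower_O by lra. rewrite <- Rpower_plus. replace (a2 - 2 + (a2 - 1)) with (2 * a2 - 3) by ring. ring.
    * apply bterm with (- / 2) (a2 - 3 / 2); auto. unfold L12; fa. replace (a2 - 3/2) with (a2 - 2 + / 2) by field. rewrite Rpower_plus. ring.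
  + eapply (fin_le _ _ _ _ _ _ a1); [exact S21| left; exact PX| apply M4; try lra; apply Rmult_le_pos; lra| lra| reflexivity| reflexivity|].
    apply min4_le; [apply Rmult_le_pos; lra| | | |].
    * apply bterm with (a1 - 2) 0; auto. unfold L21; fa. rewrite Rpower_O by lra. ring.
    * apply bterm with (2 * a1 - 3) 0; auto. unfold L21; fa. rewrite Rpower_O by lra. rewrite Rmult_1_r, <- Rpower_plus. f_equal; ring.
    * apply bterm with (a1 - 2) (a2 - 1); auto. unfold L21; fa.
    * apply bterm with (a1 - 3 / 2) (- / 2); auto. unfold L21; fa. replace (a1 - 3/2) with (a1 - 2 + / 2) by field. rewrite Rpower_plus. ring.
  + eapply (fin_le _ _ _ _ _ _ a2); [exact S22| left; exact PY| apply M4; try lra; apply Rmult_le_pos; lra| lra| reflexivity| reflexivity|].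
    apply min4_le; [apply Rmult_le_pos; lra| | | |].
    * apply bterm with 0 (a2 - 2); auto. unfold L22; fa. rewrite Rpower_O by lra. ring.
    * apply bterm with (a1 - 1) (a2 - 2); auto. unfold L22; fa. ring.
    * apply bterm with 0 (2 * a2 - 3); auto. unfold L22; fa. rewrite Rpower_O by lra. rewrite <- Rpower_plus. replace (a2 - 2 + (a2 - 1)) with (2 * a2 - 3) by ring. ring.
    * apply bterm with 0 (a2 - 2); auto. unfold L22; fa. rewrite Rpower_O by lra. ring.
Qed.

Lemma Rpower_exp K z : Rpower (exp K) z = exp (z * K).
Proof. unfold Rpower. rewrite ln_exp. reflexivity. Qed.

Lemma exp_big y : 0 < y -> y < exp y.
Proof. intro. pose proof (exp_ineq1 y ltac:(lra)). lra. Qed.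

Lemma blowup d C : 0 < d -> exists x, 0 < x <= 1 /\ C < Rpower x (- d).
Proof.
intros Hd. set (K := (Rabs C + 1) / d). assert (HK : 0 < K) by (unfold K; apply Rdiv_lt_0_compat; [pose proof (Rabs_pos C)|]; lra).
exists (exp (- K)). split. split. apply exp_pos. rewrite <- exp_0. left; apply exp_increasing; lra.
rewrite Rpower_exp. replace (- d * - K) with (Rabs C + 1) by (unfold K; field; lra).
pose proof (exp_big (Rabs C + 1) ltac:(pose proof (Rabs_pos C); lra)). pose proof (Rle_abs C). lra.
Qed.

Lemma growth d C T : 0 < d -> exists x, 1 <= x /\ T <= x /\ C < Rpower x d.
Proof.
intros Hd. pose proof (Rabs_pos C) as HC. pose proof (Rabs_pos T) as HT.
pose proof (Rdiv_lt_0_compat (Rabs C + 1) d ltac:(lra) Hd) as HQ.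
set (Q := (Rabs C + 1) / d) in *.
set (K := Q + Rabs T + 1).
assert (HK : 1 <= K) by (unfold K; lra).
exists (exp K). pose proof (exp_big K ltac:(lra)). pose proof (Rle_abs T). pose proof (Rle_abs C).
split. lra. split. unfold K in *; lra.
rewrite Rpower_exp. apply Rlt_le_trans with (exp (Rabs C + 1)).
pose proof (exp_big (Rabs C + 1) ltac:(lra)). lra.
left. apply exp_increasing. unfold K. replace (d * (Q + Rabs T + 1)) with (Rabs C + 1 + d * (Rabs T + 1)) by (unfold Q; field; lra).
nra.
Qed.

Lemma pow_contra_small p q C : p < q -> (forall x, 0 < x <= 1 -> Rpower x p <= C * Rpower x q) -> False.
Proof.
intros Hpq H. destruct (blowup (q - p) C ltac:(lra)) as [x [Hx Hc]].
specialize (H x Hx). assert (E : Rpower x p = Rpower x (- (q - p)) * Rpower x q) by (rewrite <- Rpower_plus; f_equal; ring).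
rewrite E in H. pose proof (Rpower_pos' x q). apply Rmult_le_reg_r in H; auto. lra.
Qed.

Lemma pow_contra_large p q C : q < p -> (forall x, 1 <= x -> Rpower x p <= C * Rpower x q) -> False.
Proof.
intros Hpq H. destruct (growth (p - q) C 0 ltac:(lra)) as [x [Hx [_ Hc]]].
specialize (H x Hx). assert (E : Rpower x p = Rpower x (p - q) * Rpower x q) by (rewrite <- Rpower_plus; f_equal; ring).
rewrite E in H. pose proof (Rpower_pos' x q). apply Rmult_le_reg_r in H; auto. lra.
Qed.

Lemma double_int f f1 f2 x B : 0 <= x -> (forall t, 0 <= t <= x -> deriv_nn f t (f1 t)) ->
  (forall t, 0 <= t <= x -> deriv_nn f1 t (f2 t)) -> f 0 = 0 -> f1 0 = 0 ->
  (forall t, 0 <= t <= x -> Rabs (f2 t) <= B) -> Rabs (f x) <= B * x * x.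
Proof.
intros Hx D1 D2 F0 F10 HB.
assert (HB0 : 0 <= B) by (eapply Rle_trans; [apply Rabs_pos| apply (HB 0); lra]).
assert (H1 : forall t, 0 <= t <= x -> Rabs (f1 t) <= B * x).
{ intros t Ht. replace (f1 t) with (f1 t - f1 0) by (rewrite F10; ring).
  eapply Rle_trans. apply (mvt_nn f1 f2 0 t B); [lra| |]; intros s Hs; [apply D2| apply HB]; lra.
  apply Rmult_le_compat_l; lra. }
replace (f x) with (f x - f 0) by (rewrite F0; ring).
eapply Rle_trans. apply (mvt_nn f f1 0 x (B * x)); [lra| |]; intros s Hs; [apply D1| apply H1]; lra.
right; ring.
Qed.

Lemma min4_l A B C D : min4 A B C D <= A.
Proof. unfold min4, Rmin; repeat destruct Rle_dec; lra. Qed.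
Lemma min4_2 A B C D : min4 A B C D <= B.
Proof. unfold min4, Rmin; repeat destruct Rle_dec; lra. Qed.
Lemma min4_3 A B C D : min4 A B C D <= C.
Proof. unfold min4, Rmin; repeat destruct Rle_dec; lra. Qed.

Lemma rpow_mono t x p : 0 <= t <= x -> 0 <= p -> rpow t p <= rpow x p.
Proof.
intros Ht Hp. destruct (Req_dec p 0). subst. rewrite !rpow_e0; lra.
destruct (Req_dec t 0). subst. rewrite rpow_0 by auto. apply rpow_ge0.
rewrite !rpow_pos by lra. apply Rle_Rpower_l; lra.
Qed.

Lemma condF_ident a F1 F2 : 0 < a -> condF_with (Fpow a) F1 F2 ->
  2 <= a /\ (forall r, 0 <= r -> F1 r = rpow r (a - 1)) /\ (forall r, 0 <= r -> F2 r = (a - 1) * rpow r (a - 2)).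
Proof.
intros Ha [Hnn [HC2 [Hpos [HF0 [HF10 [[c [Hc [R0 HR0]]] _]]]]]].
assert (E1 : forall r, 0 < r -> F1 r = Rpower r (a - 1)).
{ intros r Hr. apply (deriv_nn_unique (Fpow a) r); [lra| apply HC2; lra|].
  eapply deriv_nn_eq. eapply deriv_nn_of_lim; [exact Hr| apply (derivable_pt_lim_scal (fun t => Rpower t a) (/ a)); apply derivable_pt_lim_power; exact Hr|].
  intros t Ht. unfold Fpow, mult_real_fct. rewrite rpow_pos by auto. unfold Rdiv; ring.
  field; lra. }
assert (E2 : forall r, 0 < r -> F2 r = (a - 1) * Rpower r (a - 2)).
{ intros r Hr. apply (deriv_nn_unique F1 r); [lra| apply HC2; lra|].
  eapply deriv_nn_eq. eapply deriv_nn_of_lim; [exact Hr| apply derivable_pt_lim_power; exact Hr|].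
  intros t Ht. apply E1; auto. f_equal. f_equal. ring. }
assert (Ha2 : 2 <= a).
{ destruct (Rle_dec 2 a) as [|Hn]; auto. exfalso.
  destruct (Rle_dec a 1) as [Ha1|Ha1].
  - set (r := Rmax R0 1). assert (1 <= r) by (unfold r; apply Rmax_r). assert (R0 <= r) by (unfold r; apply Rmax_l).
    specialize (HR0 r H0). rewrite E2 in HR0 by lra. pose proof (Rpower_pos' r (a - 2)). nra.
  -
    destruct (growth (2 - a) ((a - 1) / c) (Rmax R0 1) ltac:(lra)) as [r [Hr1 [Hr2 Hr3]]].
    assert (R0 <= r) by (pose proof (Rmax_l R0 1); lra).
    specialize (HR0 r H). rewrite E2 in HR0 by lra.
    assert (Rpower r (a - 2) * Rpower r (2 - a) = 1) by (rewrite <- Rpower_plus; replace (a - 2 + (2 - a)) with 0 by ring; apply Rpower_O; lra).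
    pose proof (Rpower_pos' r (a - 2)). pose proof (Rpower_pos' r (2 - a)).
    assert ((a - 1) / c * c = a - 1) by (field; lra).
    nra. }
split; auto. split.
- intros r Hr. destruct Hr as [Hr|Hr]. rewrite E1, rpow_pos; auto. subst r. rewrite HF10, rpow_0; auto; lra.
- intros r Hr. apply (deriv_nn_unique F1 r); [lra| apply HC2; lra|].
  eapply deriv_nn_eq. eapply deriv_nn_ext; [exact Hr| |apply (rpow_deriv (a - 1) r); lra].
  intros t Ht. destruct Ht as [Ht|Ht]. rewrite E1, rpow_pos; auto. subst t. rewrite HF10, rpow_0; auto; lra.
  f_equal. f_equal. ring.
Qed.

Lemma Rpower_base1 z : Rpower 1 z = 1.
Proof. unfold Rpower. rewrite ln_1, Rmult_0_r. apply exp_0. Qed.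

Lemma div_le_help X D E : 0 < X -> 0 < D -> D <= E -> X <= E * (X / D).
Proof. intros. replace X with (D * (X / D)) at 1 by (field; lra). apply Rmult_le_compat_r; [|lra].
left; apply Rdiv_lt_0_compat; auto. Qed.

Lemma hm_x1 b1 b2 g x : 0 < g -> 0 < x <= 1 -> Rpower x b1 <= Rpower 3 g * Rabs (hmodel b1 b2 g x 1).
Proof.
intros Hg Hx. unfold hmodel. rewrite !rpow_pos by lra. rewrite Rpower_base1.
pose proof (Rpower_pos' x b1). pose proof (Rpower_pos' (1 + x + 1) g).
rewrite Rabs_right. rewrite Rmult_1_r. apply div_le_help; auto. apply Rle_Rpower_l; lra.
apply Rle_ge; left; apply Rdiv_lt_0_compat; lra.
Qed.

Lemma hm_1x b1 b2 g x : 0 < g -> 0 < x <= 1 -> Rpower x b2 <= Rpower 3 g * Rabs (hmodel b1 b2 g 1 x).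
Proof.
intros Hg Hx. unfold hmodel. rewrite !rpow_pos by lra. rewrite Rpower_base1.
pose proof (Rpower_pos' x b2). pose proof (Rpower_pos' (1 + 1 + x) g).
rewrite Rabs_right. rewrite Rmult_1_l. apply div_le_help; auto. apply Rle_Rpower_l; lra.
apply Rle_ge; left; apply Rdiv_lt_0_compat; lra.
Qed.

Lemma hm_xx b1 b2 g x : 0 < g -> 1 <= x -> Rpower x (b1 + b2 - g) <= Rpower 3 g * Rabs (hmodel b1 b2 g x x).
Proof.
intros Hg Hx. unfold hmodel. rewrite !rpow_pos by lra.
pose proof (Rpower_pos' x b1). pose proof (Rpower_pos' x b2). pose proof (Rpower_pos' (1 + x + x) g).
pose proof (Rpower_pos' x g). pose proof (Rpower_pos' 3 g).
rewrite Rabs_right by (apply Rle_ge; left; apply Rdiv_lt_0_compat; nra).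
assert (E : Rpower x (b1 + b2 - g) = Rpower x b1 * Rpower x b2 / Rpower x g).
{ unfold Rminus. rewrite !Rpower_plus, Rpower_Ropp. unfold Rdiv; ring. }
rewrite E. assert (Rpower (1 + x + x) g <= Rpower 3 g * Rpower x g).
{ rewrite Rpower_mult_distr by lra. apply Rle_Rpower_l; lra. }
set (X := Rpower x b1 * Rpower x b2). assert (0 < X) by (unfold X; nra).
apply Rmult_le_reg_r with (Rpower (1 + x + x) g * Rpower x g). nra.
replace (X / Rpower x g * (Rpower (1 + x + x) g * Rpower x g)) with (X * Rpower (1 + x + x) g) by (field; lra).
replace (Rpower 3 g * (X / Rpower (1 + x + x) g) * (Rpower (1 + x + x) g * Rpower x g)) with (X * (Rpower 3 g * Rpower x g)) by (field; lra).
apply Rmult_le_compat_l; lra.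
Qed.

Lemma nec a1 a2 b1 b2 g : 0 < a1 -> 0 < a2 -> 0 < b1 -> 0 < b2 -> 0 < g ->
  all_conditions (Fpow a1) (Fpow a2) (hmodel b1 b2 g) ->
  2 <= a1 /\ 2 <= a2 /\ 2 * a1 - 1 <= b1 /\ 2 * a2 - 1 <= b2 /\ b1 + b2 <= g + Rmin a1 a2.
Proof.
intros Ha1 Ha2 Hb1 Hb2 Hg H.
destruct H as (F1d & F1dd & F2d & F2dd & h1 & h2 & h11 & h12 & h21 & h22 & CF1 & CF2 & C2 & Hz1 & Hz2 & _ &
  (k11 & k12 & k21 & k22 & Hk11 & Hk12 & Hk21 & Hk22 & HB)).
destruct (condF_ident a1 F1d F1dd Ha1 CF1) as [A1 [E1d E1dd]].
destruct (condF_ident a2 F2d F2dd Ha2 CF2) as [A2 [E2d E2dd]].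
set (hm := hmodel b1 b2 g).
assert (B11 : forall t y, 0 <= t -> 0 <= y -> Rabs (h11 t y) <= k11 * (a1 - 1) * rpow t (a1 - 2) * min4 1 (F1d t) (F2d y) (sqrt (t / t))).
{ intros t y Ht Hy. destruct (HB t y Ht Hy) as [K _]. rewrite E1dd in K by auto. rewrite <- Rmult_assoc in K. exact K. }
assert (B22 : forall x t, 0 <= x -> 0 <= t -> Rabs (h22 x t) <= k22 * (a2 - 1) * rpow t (a2 - 2) * min4 1 (F1d x) (F2d t) (sqrt (t / t))).
{ intros x t Hx Ht. destruct (HB x t Hx Ht) as [_ [_ [_ K]]]. rewrite E2dd in K by auto. rewrite <- Rmult_assoc in K. exact K. }
assert (K1 : 0 <= k11 * (a1 - 1)) by nra. assert (K2 : 0 <= k22 * (a2 - 1)) by nra.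
assert (M0 : forall t y, 0 <= t -> 0 <= y -> 0 <= min4 1 (F1d t) (F2d y) (sqrt (t / t)) /\ 0 <= min4 1 (F1d t) (F2d y) (sqrt (y / y))).
{ intros t y Ht Hy. rewrite E1d, E2d by auto. split; apply min4_ge0; try lra; try apply rpow_ge0; apply sqrt_pos. }
split; auto. split; auto. split; [|split].
- destruct (Rle_dec (2 * a1 - 1) b1) as [|Hn]; auto. exfalso.
  apply (pow_contra_small b1 (2 * a1 - 1) (Rpower 3 g * (k11 * (a1 - 1)))); [lra|].
  intros x Hx. eapply Rle_trans; [apply (hm_x1 b1 b2 g x); auto|].
  rewrite Rmult_assoc. apply Rmult_le_compat_l; [left; apply Rpower_pos'|].
  eapply Rle_trans. apply (double_int (fun t => hm t 1) (fun t => h1 t 1) (fun t => h11 t 1) x (k11 * (a1 - 1) * rpow x (a1 - 2) * rpow x (a1 - 1))); [lra| | | | |].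
  + intros t Ht. apply (C2 t 1); lra.
  + intros t Ht. apply (C2 t 1); lra.
  + apply Hz2; lra.
  + apply Hz2; lra.
  + intros t Ht. eapply Rle_trans; [apply B11; lra|]. rewrite (E1d t) by lra.
    pose proof (M0 t 1 ltac:(lra) ltac:(lra)) as [M1 _]. rewrite E1d in M1 by lra.
    pose proof (min4_2 1 (rpow t (a1 - 1)) (F2d 1) (sqrt (t / t))).
    pose proof (rpow_ge0 t (a1 - 2)). pose proof (rpow_ge0 t (a1 - 1)).
    pose proof (rpow_mono t x (a1 - 2) ltac:(lra) ltac:(lra)). pose proof (rpow_mono t x (a1 - 1) ltac:(lra) ltac:(lra)).
    rewrite !Rmult_assoc. apply Rmult_le_compat_l; [nra|]. rewrite <- !Rmult_assoc. 
    apply Rmult_le_compat; try nra.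
  + rewrite !rpow_pos by lra. right.
    replace (2 * a1 - 1) with ((a1 - 2) + (a1 - 1) + 1 + 1) by ring. rewrite !Rpower_plus, Rpower_1 by lra. ring.
- destruct (Rle_dec (2 * a2 - 1) b2) as [|Hn]; auto. exfalso.
  apply (pow_contra_small b2 (2 * a2 - 1) (Rpower 3 g * (k22 * (a2 - 1)))); [lra|].
  intros x Hx. eapply Rle_trans; [apply (hm_1x b1 b2 g x); auto|].
  rewrite Rmult_assoc. apply Rmult_le_compat_l; [left; apply Rpower_pos'|].
  eapply Rle_trans. apply (double_int (fun t => hm 1 t) (fun t => h2 1 t) (fun t => h22 1 t) x (k22 * (a2 - 1) * rpow x (a2 - 2) * rpow x (a2 - 1))); [lra| | | | |].
  + intros t Ht. apply (C2 1 t); lra.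
  + intros t Ht. apply (C2 1 t); lra.
  + apply Hz1; lra.
  + apply Hz1; lra.
  + intros t Ht. eapply Rle_trans; [apply B22; lra|]. rewrite (E2d t) by lra.
    pose proof (M0 1 t ltac:(lra) ltac:(lra)) as [_ M1]. rewrite E2d in M1 by lra.
    pose proof (min4_3 1 (F1d 1) (rpow t (a2 - 1)) (sqrt (t / t))).
    pose proof (rpow_ge0 t (a2 - 2)). pose proof (rpow_ge0 t (a2 - 1)).
    pose proof (rpow_mono t x (a2 - 2) ltac:(lra) ltac:(lra)). pose proof (rpow_mono t x (a2 - 1) ltac:(lra) ltac:(lra)).
    rewrite !Rmult_assoc. apply Rmult_le_compat_l; [nra|]. rewrite <- !Rmult_assoc.
    apply Rmult_le_compat; try nra.
  + rewrite !rpow_pos by lra. right.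
    replace (2 * a2 - 1) with ((a2 - 2) + (a2 - 1) + 1 + 1) by ring. rewrite !Rpower_plus, Rpower_1 by lra. ring.
- assert (L1 : b1 + b2 <= g + a1).
  { destruct (Rle_dec (b1 + b2) (g + a1)) as [|Hn]; auto. exfalso.
    apply (pow_contra_large (b1 + b2 - g) a1 (Rpower 3 g * (k11 * (a1 - 1)))); [lra|].
    intros x Hx. eapply Rle_trans; [apply (hm_xx b1 b2 g x); auto|].
    rewrite Rmult_assoc. apply Rmult_le_compat_l; [left; apply Rpower_pos'|].
    eapply Rle_trans. apply (double_int (fun t => hm t x) (fun t => h1 t x) (fun t => h11 t x) x (k11 * (a1 - 1) * rpow x (a1 - 2))); [lra| | | | |].
    + intros t Ht. apply (C2 t x); lra.
    + intros t Ht. apply (C2 t x); lra.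
    + apply Hz2; lra.
    + apply Hz2; lra.
    + intros t Ht. eapply Rle_trans; [apply B11; lra|].
      pose proof (M0 t x ltac:(lra) ltac:(lra)) as [M1 _].
      pose proof (min4_l 1 (F1d t) (F2d x) (sqrt (t / t))).
      pose proof (rpow_ge0 t (a1 - 2)).
      pose proof (rpow_mono t x (a1 - 2) ltac:(lra) ltac:(lra)).
      apply Rle_trans with (k11 * (a1 - 1) * rpow t (a1 - 2) * 1). apply Rmult_le_compat_l; [apply Rmult_le_pos|]; lra. rewrite Rmult_1_r. apply Rmult_le_compat_l; lra.
    + rewrite !rpow_pos by lra. right.
      replace (Rpower x a1) with (Rpower x ((a1 - 2) + 1 + 1)) by (f_equal; ring). rewrite !Rpower_plus, Rpower_1 by lra. ring. }
  assert (L2 : b1 + b2 <= g + a2).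
  { destruct (Rle_dec (b1 + b2) (g + a2)) as [|Hn]; auto. exfalso.
    apply (pow_contra_large (b1 + b2 - g) a2 (Rpower 3 g * (k22 * (a2 - 1)))); [lra|].
    intros x Hx. eapply Rle_trans; [apply (hm_xx b1 b2 g x); auto|].
    rewrite Rmult_assoc. apply Rmult_le_compat_l; [left; apply Rpower_pos'|].
    eapply Rle_trans. apply (double_int (fun t => hm x t) (fun t => h2 x t) (fun t => h22 x t) x (k22 * (a2 - 1) * rpow x (a2 - 2))); [lra| | | | |].
    + intros t Ht. apply (C2 x t); lra.
    + intros t Ht. apply (C2 x t); lra.
    + apply Hz1; lra.
    + apply Hz1; lra.
    + intros t Ht. eapply Rle_trans; [apply B22; lra|].
      pose proof (M0 x t ltac:(lra) ltac:(lra)) as [_ M1].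
      pose proof (min4_l 1 (F1d x) (F2d t) (sqrt (t / t))).
      pose proof (rpow_ge0 t (a2 - 2)).
      pose proof (rpow_mono t x (a2 - 2) ltac:(lra) ltac:(lra)).
      apply Rle_trans with (k22 * (a2 - 1) * rpow t (a2 - 2) * 1). apply Rmult_le_compat_l; [apply Rmult_le_pos|]; lra. rewrite Rmult_1_r. apply Rmult_le_compat_l; lra.
    + rewrite !rpow_pos by lra. right.
      replace (Rpower x a2) with (Rpower x ((a2 - 2) + 1 + 1)) by (f_equal; ring). rewrite !Rpower_plus, Rpower_1 by lra. ring. }
  unfold Rmin; destruct Rle_dec; lra.
Qed.

Theorem propositionA1 (a1 a2 b1 b2 gamma : R) :
  0 < a1 -> 0 < a2 -> 0 < b1 -> 0 < b2 -> 0 < gamma ->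
  (all_conditions (Fpow a1) (Fpow a2) (hmodel b1 b2 gamma) <->
   (2 <= a1 /\ 2 <= a2 /\ 2 * a1 - 1 <= b1 /\ 2 * a2 - 1 <= b2 /\
    b1 + b2 <= gamma + Rmin a1 a2)).
Proof.
intros Ha1 Ha2 Hb1 Hb2 Hg. split.
- intro H. apply nec; auto.
- intros [A1 [A2 [B1 [B2 C]]]]. apply suff; auto.
  + pose proof (Rmin_l a1 a2); lra.
  + pose proof (Rmin_r a1 a2); lra.
Qed.
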